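(* There is a constant $c$ depending only on the constants of Assumption (A) such that the following holds. Let $L\in\mathbb{N}$, $\tau=T/L$, $k\in\{0,\dots,L-1\}$, and let $\phi:\mathbb{R}^d\to\mathbb{R}$ be Lipschitz continuous with constant $M$. Then for all $x,x'\in\mathbb{R}^d$ and $p\in\Delta(I)$, $$\Big|\mathbb{E}[\phi(\bar X^{k,x}_{k+1})]+\tau H\Big(t_k,x,\tfrac1\tau\mathbb{E}\big[\phi(\bar X^{k,x}_{k+1})(\sigma^* )^{-1}(t_k,x)\Delta B^k\big],p\Big)-\mathbb{E}[\phi(\bar X^{k,x'}_{k+1})]-\tau H\Big(t_k,x',\tfrac1\tau\mathbb{E}\big[\phi(\bar X^{k,x'}_{k+1})(\sigma^* )^{-1}(t_k,x')\Delta B^k\big],p\Big)\Big|\le \big(M(1+c\tau)+c\tau\big)|x-x'|.$$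
   Context: Standing setup. Fix $T>0$, integers $d,I\ge1$, compact subsets $U,V$ of finite-dimensional spaces, and $\Delta(I)=\{p\in\mathbb{R}^I:p_i\ge0,\ \sum_ip_i=1\}$. Let $b:[0,T]\times\mathbb{R}^d\times U\times V\to\mathbb{R}^d$, $\sigma:[0,T]\times\mathbb{R}^d\to\mathbb{R}^{d\times d}$, $l_i:[0,T]\times\mathbb{R}^d\times U\times V\to\mathbb{R}$ and $g_i:\mathbb{R}^d\to\mathbb{R}$ ($i=1,\dots,I$) satisfy Assumption (A): (i) $b$ is bounded, continuous, and Lipschitz in $(t,x)$ uniformly in $(u,v)$; (ii) $\sigma$ is bounded and Lipschitz in $(t,x)$, the transpose $\sigma^*(t,x)$ is invertible for every $(t,x)$, and $(\sigma^* )^{-1}$ is bounded and Lipschitz in $(t,x)$; (iii) each $l_i$ is bounded, continuous and Lipschitz in $(t,x)$ uniformly in $(u,v)$, and each $g_i$ is bounded and Lipschitz; (iv) (Isaacs condition) for all $(t,x,\xi,p)\in[0,T]\times\mathbb{R}^d\times\mathbb{R}^d\times\Delta(I)$, $\inf_{u\in U}\sup_{v\in V}\{\langle b(t,x,u,v),\xi\rangle+\sum_ip_il_i(t,x,u,v)\}=\sup_{v\in V}\inf_{u\in U}\{\cdots\}=:H(t,x,\xi,p)$. ''Constants of Assumption (A)'' means the bounds and Lipschitz constants in (i)–(iii) together with $T,d,I$. (Under (A) there is $c$ with $|H(t,x,\xi,p)|\le c(1+|\xi|)$ and $|H(t,x,\xi,p)-H(t',x',\xi',p')|\le c(1+|\xi|)(|x-x'|+|t-t'|)+c|\xi-\xi'|+c|p-p'|$.)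 Discretization. Let $B$ be a $d$-dimensional standard Brownian motion. For $L\in\mathbb{N}$ set $\tau=T/L$, $t_k=k\tau$ ($k=0,\dots,L$), $\Delta B^k=B_{t_{k+1}}-B_{t_k}$. For $k\in\{0,\dots,L\}$ and $x\in\mathbb{R}^d$ the Euler scheme is $\bar X^{k,x}_n=x+\sum_{j=k}^{n-1}\sigma(t_j,\bar X^{k,x}_j)\Delta B^j$, $n=k,\dots,L$; in particular $\bar X^{k,x}_{k+1}=x+\sigma(t_k,x)\Delta B^k$. *)

(* Defs.v *)
From Stdlib Require Import Reals Lra Lia Classical ClassicalEpsilon.
Open Scope R_scope.

(* Vectors of R^n are functions nat -> R; only coordinates 0..n-1 matter. *)
Definition vec := nat -> R.
Definition mat := nat -> nat -> R.

Fixpoint sumn (n : nat) (f : nat -> R) : R :=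
  match n with O => 0 | S m => sumn m f + f m end.

Definition dot (n : nat) (x y : vec) : R := sumn n (fun i => x i * y i).
Definition norm (n : nat) (x : vec) : R := sqrt (dot n x x).
Definition vdist (n : nat) (x y : vec) : R := norm n (fun i => x i - y i).
Definition vadd (x y : vec) : vec := fun i => x i + y i.
Definition matvec (n : nat) (A : mat) (z : vec) : vec :=
  fun i => sumn n (fun j => A i j * z j).
Definition mnorm (n : nat) (A : mat) : R :=
  sqrt (sumn n (fun i => sumn n (fun j => A i j ^ 2))).
Definition kron (i j : nat) : R := if Nat.eqb i j then 1 else 0.

Definition bounded_set (m : nat) (S : vec -> Prop) : Prop :=
  exists C, forall u, S u -> norm m u <= C.
Definition closed_set (m : nat) (S : vec -> Prop) : Prop :=
  forall (s : nat -> vec) (u : vec),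
    (forall k, S (s k)) ->
    (forall eps, 0 < eps -> exists N, forall k, (N <= k)%nat -> vdist m (s k) u < eps) ->
    S u.
Definition compact_set (m : nat) (S : vec -> Prop) : Prop :=
  closed_set m S /\ bounded_set m S.

Definition simplex (I : nat) (p : vec) : Prop :=
  (forall i, (i < I)%nat -> 0 <= p i) /\ sumn I p = 1.

(* Supremum / infimum of a set of reals (classical choice; meaningful when the
   set is nonempty and bounded, which is the case under Assumption (A)). *)
Definition sup_R (P : R -> Prop) : R := epsilon (inhabits 0) (fun s => is_lub P s).
Definition inf_R (P : R -> Prop) : R := - sup_R (fun y => P (- y)).

Definition Hinfsup (d I : nat) (U V : vec -> Prop)
  (b : R -> vec -> vec -> vec -> vec) (l : nat -> R -> vec -> vec -> vec -> R)
  (t : R) (x xi p : vec) : R :=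
  inf_R (fun w => exists u, U u /\
     w = sup_R (fun z => exists v, V v /\
            z = dot d (b t x u v) xi + sumn I (fun i => p i * l i t x u v))).
Definition Hsupinf (d I : nat) (U V : vec -> Prop)
  (b : R -> vec -> vec -> vec -> vec) (l : nat -> R -> vec -> vec -> vec -> R)
  (t : R) (x xi p : vec) : R :=
  sup_R (fun w => exists v, V v /\
     w = inf_R (fun z => exists u, U u /\
            z = dot d (b t x u v) xi + sumn I (fun i => p i * l i t x u v))).

Definition inT (T t : R) : Prop := 0 <= t <= T.

Definition assumptionA (T : R) (d I mU mV : nat) (U V : vec -> Prop)
  (b : R -> vec -> vec -> vec -> vec) (sigma : R -> vec -> mat) (sinv : R -> vec -> mat)
  (l : nat -> R -> vec -> vec -> vec -> R) (g : nat -> vec -> R)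
  (Cb Lb Cs Ls Ci Li Cl Ll Cg Lg : R) : Prop :=
  compact_set mU U /\ compact_set mV V /\ (exists u, U u) /\ (exists v, V v) /\
  (forall t x u v, inT T t -> U u -> V v -> norm d (b t x u v) <= Cb) /\
  (forall t x u v, inT T t -> U u -> V v -> forall eps, 0 < eps -> exists delta, 0 < delta /\
     forall t' x' u' v', inT T t' -> U u' -> V v' -> Rabs (t - t') < delta ->
       vdist d x x' < delta -> vdist mU u u' < delta -> vdist mV v v' < delta ->
       vdist d (b t x u v) (b t' x' u' v') < eps) /\
  (forall t t' x x' u v, inT T t -> inT T t' -> U u -> V v ->
     vdist d (b t x u v) (b t' x' u v) <= Lb * (Rabs (t - t') + vdist d x x')) /\
  (* (ii) sigma bounded Lipschitz, sigma^* invertible with inverse sinv bounded Lipschitz *)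
  (forall t x, inT T t -> mnorm d (sigma t x) <= Cs) /\
  (forall t t' x x', inT T t -> inT T t' ->
     mnorm d (fun i j => sigma t x i j - sigma t' x' i j) <= Ls * (Rabs (t - t') + vdist d x x')) /\
  (forall t x, inT T t -> forall i j, (i < d)%nat -> (j < d)%nat ->
     sumn d (fun k => sigma t x k i * sinv t x k j) = kron i j /\
     sumn d (fun k => sinv t x i k * sigma t x j k) = kron i j) /\
  (forall t x, inT T t -> mnorm d (sinv t x) <= Ci) /\
  (forall t t' x x', inT T t -> inT T t' ->
     mnorm d (fun i j => sinv t x i j - sinv t' x' i j) <= Li * (Rabs (t - t') + vdist d x x')) /\
  (forall i t x u v, (i < I)%nat -> inT T t -> U u -> V v -> Rabs (l i t x u v) <= Cl) /\
  (forall i t x u v, (i < I)%nat -> inT T t -> U u -> V v -> forall eps, 0 < eps ->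
     exists delta, 0 < delta /\
     forall t' x' u' v', inT T t' -> U u' -> V v' -> Rabs (t - t') < delta ->
       vdist d x x' < delta -> vdist mU u u' < delta -> vdist mV v v' < delta ->
       Rabs (l i t x u v - l i t' x' u' v') < eps) /\
  (forall i t t' x x' u v, (i < I)%nat -> inT T t -> inT T t' -> U u -> V v ->
     Rabs (l i t x u v - l i t' x' u v) <= Ll * (Rabs (t - t') + vdist d x x')) /\
  (forall i x, (i < I)%nat -> Rabs (g i x) <= Cg) /\
  (forall i x x', (i < I)%nat -> Rabs (g i x - g i x') <= Lg * vdist d x x') /\
  (forall t x xi p, inT T t -> simplex I p ->
     Hinfsup d I U V b l t x xi p = Hsupinf d I U V b l t x xi p).

Definition gdens (tau z : R) : R := exp (- (z ^ 2) / (2 * tau)) / sqrt (2 * PI * tau).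

Definition gauss1 (tau : R) (g : R -> R) (lv : R) : Prop :=
  exists pr : (forall a c, Riemann_integrable (fun z => g z * gdens tau z) a c),
  forall eps, 0 < eps -> exists A, forall a c, a <= - A -> A <= c ->
    Rabs (RiemannInt (pr a c) - lv) < eps.

Definition vupd (z : vec) (m : nat) (s : R) : vec :=
  fun i => if Nat.eqb i m then s else z i.

(* gauss_int n tau F lv : E[F(Z)] = lv where Z = (Z_0,..,Z_{n-1},0,0,..) with
   Z_0,..,Z_{n-1} i.i.d. N(0,tau), computed as an iterated improper integral. *)
Fixpoint gauss_int (n : nat) (tau : R) (F : vec -> R) (lv : R) : Prop :=
  match n with
  | O => lv = F (fun _ => 0)
  | S m => exists G : vec -> R,
      (forall z, gauss1 tau (fun s => F (vupd z m s)) (G z)) /\ gauss_int m tau G lv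
  end.

(* Main.v *)
Require Import Defs.
From Coquelicot Require Import Coquelicot.
From Stdlib Require Import Reals Lra Lia Psatz FunctionalExtensionality ClassicalEpsilon.
Require Import Defs.
Open Scope R_scope.

Lemma cont_R (f : R -> R) x : ex_derive f x -> continuous f x.
Proof. apply (ex_derive_continuous (K:=R_AbsRing) (V:=R_NormedModule)). Qed.
Lemma exRInt_cont (f : R -> R) a b : (forall z, Rmin a b <= z <= Rmax a b -> continuous f z) -> ex_RInt f a b.
Proof. apply (ex_RInt_continuous (V:=R_CompleteNormedModule)). Qed.

Definition Eg (t : R) : R := exp (- (t * t)).

Lemma Eg_cont : forall x, continuous Eg x.
Proof. intros x; apply cont_R; unfold Eg; auto_derive; auto. Qed.

Lemma Eg_exRInt : forall a b, ex_RInt Eg a b.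
Proof. intros; apply exRInt_cont; intros; apply Eg_cont. Qed.

Definition Gi (x : R) : R := RInt Eg 0 x.

Lemma Gi_deriv : forall x, is_derive Gi x (Eg x).
Proof.
  intros x. apply (is_derive_RInt Eg Gi 0 x).
  - apply filter_forall; intros y. unfold Gi; apply (RInt_correct (V:=R_CompleteNormedModule)), Eg_exRInt.
  - apply Eg_cont.
Qed.

Definition fB (u t : R) : R := exp (- (u * u) * (1 + t * t)) / (1 + t * t).
Definition Bf (x : R) : R := RInt (fun t => fB x t) 0 1.

Lemma onept_pos : forall t, 0 < 1 + t * t.
Proof. intros; nra. Qed.

Lemma fB_deriv : forall u t, is_derive (fun z => fB z t) u (-2 * u * exp (- (u * u) * (1 + t * t))).
Proof.
  intros u t. unfold fB. auto_derive.
  - pose proof (onept_pos t); lra.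
  - field. pose proof (onept_pos t); lra.
Qed.

Lemma fB_cont2 : forall u t, continuity_2d_pt (fun u v => Derive (fun z => fB z v) u) u t.
Proof.
  intros u t.
  apply continuity_2d_pt_ext with (f := fun u v => (-2 * u) * exp (- (u * u) * (1 + v * v))).
  { intros; symmetry; apply is_derive_unique, fB_deriv. }
  apply continuity_2d_pt_mult.
  - apply continuity_2d_pt_mult. apply continuity_2d_pt_const. apply continuity_2d_pt_id1.
  - apply continuity_1d_2d_pt_comp.
    + apply derivable_continuous_pt, derivable_pt_exp.
    + apply continuity_2d_pt_mult.
      * apply continuity_2d_pt_opp. apply continuity_2d_pt_mult; apply continuity_2d_pt_id1.
      * apply continuity_2d_pt_plus. apply continuity_2d_pt_const.
        apply continuity_2d_pt_mult; apply continuity_2d_pt_id2.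
Qed.

Lemma fB_exRInt : forall u a b, ex_RInt (fun t => fB u t) a b.
Proof.
  intros. apply exRInt_cont; intros. apply cont_R. unfold fB.
  auto_derive. pose proof (onept_pos z); lra.
Qed.

Lemma Eg_lin_exRInt : forall x a b, ex_RInt (fun t => Eg (x * t)) a b.
Proof.
  intros. apply exRInt_cont; intros. apply cont_R. unfold Eg. auto_derive; auto.
Qed.

Lemma Bf_deriv : forall x, is_derive Bf x (-2 * x * Eg x * RInt (fun t => Eg (x * t)) 0 1).
Proof.
  intros x.
  assert (H := is_derive_RInt_param fB 0 1 x).
  unfold Bf.
  replace (-2 * x * Eg x * RInt (fun t => Eg (x * t)) 0 1)
    with (RInt (fun t => Derive (fun u => fB u t) x) 0 1).
  apply H.
  - apply filter_forall; intros; eexists; apply fB_deriv.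
  - intros; apply fB_cont2.
  - apply filter_forall; intros; apply fB_exRInt.
  - rewrite (RInt_ext _ (fun t => scal (-2 * x * Eg x) (Eg (x * t)))).
    + rewrite (RInt_scal (V:=R_CompleteNormedModule)). reflexivity. apply Eg_lin_exRInt.
    + intros t _. replace (Derive (fun u => fB u t) x) with (-2 * x * exp (- (x * x) * (1 + t * t)))
        by (symmetry; apply is_derive_unique; apply fB_deriv).
      unfold Eg, scal; simpl; unfold mult; simpl.
      replace (-(x*x)*(1+t*t)) with (-(x*x) + -((x*t)*(x*t))) by ring; rewrite exp_plus; ring.
Qed.

Lemma Gi_lin : forall x, Gi x = x * RInt (fun t => Eg (x * t)) 0 1.
Proof.
  intros x. unfold Gi.
  assert (H := RInt_comp_lin (V:=R_CompleteNormedModule) Eg x 0 0 1).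
  replace (x * 0 + 0) with 0 in H by ring.
  replace (x * 1 + 0) with x in H by ring.
  rewrite <- H by apply Eg_exRInt.
  rewrite <- (RInt_scal (V:=R_CompleteNormedModule)) by apply Eg_lin_exRInt.
  apply RInt_ext; intros. unfold scal; simpl; unfold mult; simpl. f_equal. f_equal. ring.
Qed.

Definition Kf (x : R) : R := Gi x * Gi x + Bf x.

Lemma Kf_deriv : forall x, is_derive Kf x 0.
Proof.
  intros x. unfold Kf.
  assert (H1 : is_derive (fun y => Gi y * Gi y) x (Eg x * Gi x + Gi x * Eg x)).
  { apply (is_derive_mult (K:=R_AbsRing) Gi Gi x (Eg x) (Eg x)). apply Gi_deriv. apply Gi_deriv.
    intros; unfold mult; simpl; ring. }
  assert (H2 := is_derive_plus (K:=R_AbsRing) (V:=R_NormedModule) _ _ x _ _ H1 (Bf_deriv x)).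
  replace 0 with (plus (Eg x * Gi x + Gi x * Eg x) (-2 * x * Eg x * RInt (fun t => Eg (x * t)) 0 1)).
  exact H2. unfold plus; simpl. rewrite Gi_lin. ring.
Qed.

Lemma Kf_const : forall x, Kf x = Kf 0.
Proof.
  intros x.
  assert (H := is_RInt_derive (V:=R_CompleteNormedModule) Kf (fun _ => 0) 0 x).
  assert (H0 : is_RInt (V:=R_CompleteNormedModule) (fun _ => 0) 0 x (minus (Kf x) (Kf 0))).
  { apply H. intros; apply Kf_deriv. intros; apply continuous_const. }
  assert (H1 : is_RInt (V:=R_CompleteNormedModule) (fun _ => 0) 0 x (scal (x - 0) 0)).
  { apply (is_RInt_const (V:=R_CompleteNormedModule)). }
  apply is_RInt_unique in H0. apply is_RInt_unique in H1.
  rewrite H0 in H1. unfold minus, plus, opp, scal in H1; simpl in H1.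
  unfold plus, opp, mult in H1; simpl in H1. lra.
Qed.

Lemma Kf0 : Kf 0 = PI / 4.
Proof.
  unfold Kf, Gi, Bf. rewrite RInt_point. unfold zero; simpl.
  rewrite (RInt_ext _ (fun t => / (1 + t ^ 2))).
  2:{ intros t _. unfold fB. replace (- (0 * 0) * (1 + t * t)) with 0 by ring. rewrite exp_0. unfold Rdiv; rewrite Rmult_1_l; f_equal; ring.
 }
  assert (H := is_RInt_derive (V:=R_CompleteNormedModule) atan (fun t => / (1 + t ^ 2)) 0 1).
  assert (Ha : forall x : R, Rmin 0 1 <= x <= Rmax 0 1 -> is_derive atan x (/ (1 + x ^ 2))).
  { intros; apply is_derive_Reals, derivable_pt_lim_atan. }
  assert (Hb : forall x : R, Rmin 0 1 <= x <= Rmax 0 1 -> continuous (fun t : R => / (1 + t ^ 2)) x).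
  { intros; apply cont_R. auto_derive. pose proof (onept_pos x); simpl; nra. }
  rewrite (is_RInt_unique _ _ _ _ (H Ha Hb)).
  unfold minus, plus, opp; simpl. rewrite atan_1, atan_0. ring.
Qed.

Lemma exp_le_mono : forall a b, a <= b -> exp a <= exp b.
Proof. intros a b H. destruct (Req_dec a b). subst; lra. apply Rlt_le, exp_increasing; lra. Qed.

Lemma Bf_bounds : forall x, 0 <= Bf x <= exp (- (x * x)).
Proof.
  intros x. unfold Bf. split.
  - apply RInt_ge_0. lra. apply fB_exRInt. intros t _. unfold fB.
    apply Rlt_le, Rdiv_lt_0_compat. apply exp_pos. apply onept_pos.
  - assert (Hc : RInt (fun _ => exp (- (x * x))) 0 1 = exp (- (x * x))).
    { rewrite RInt_const. unfold scal; simpl; unfold mult; simpl. ring. }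
    apply Rle_trans with (RInt (fun _ => exp (- (x * x))) 0 1); [|lra].
    apply RInt_le. lra. apply fB_exRInt. apply (ex_RInt_const (V:=R_CompleteNormedModule)).
    intros t Ht. unfold fB. pose proof (onept_pos t).
    apply Rle_trans with (exp (- (x * x) * (1 + t * t))).
    + unfold Rdiv. rewrite <- (Rmult_1_r (exp _)) at 2. apply Rmult_le_compat_l.
      apply Rlt_le, exp_pos. rewrite <- Rinv_1. apply Rinv_le_contravar; nra.
    + apply exp_le_mono. nra.
Qed.

Lemma exp_neg_le : forall y, 0 <= y -> exp (- y) <= 1 / (1 + y).
Proof.
  intros y Hy. destruct (Req_dec y 0).
  - subst. rewrite Ropp_0, exp_0. lra.
  - assert (H1 : 1 + y < exp y) by (apply exp_ineq1; lra).
    rewrite exp_Ropp. unfold Rdiv. rewrite Rmult_1_l. apply Rinv_le_contravar; lra.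
Qed.

Lemma Gi_nonneg : forall x, 0 <= x -> 0 <= Gi x.
Proof.
  intros x Hx. unfold Gi. apply RInt_ge_0. lra. apply Eg_exRInt.
  intros; unfold Eg; apply Rlt_le, exp_pos.
Qed.

Lemma Gi_sq : forall x, Gi x * Gi x = PI / 4 - Bf x.
Proof. intros x. pose proof (Kf_const x). rewrite Kf0 in H. unfold Kf in H. lra. Qed.

Lemma sqrtPI_pos : 0 < sqrt PI.
Proof. apply sqrt_lt_R0, PI_RGT_0. Qed.

Lemma Gi_lim : forall eps, 0 < eps -> exists X, forall x, X <= x -> Rabs (Gi x - sqrt PI / 2) < eps.
Proof.
  intros eps He. set (s := sqrt PI / 2).
  assert (Hs : 0 < s) by (unfold s; pose proof sqrtPI_pos; lra).
  assert (Hs2 : s * s = PI / 4).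
  { unfold s. replace (sqrt PI / 2 * (sqrt PI / 2)) with (sqrt PI * sqrt PI / 4) by field.
    rewrite sqrt_sqrt. reflexivity. pose proof PI_RGT_0; lra. }
  exists (1 + / (eps * s)). intros x Hx.
  assert (Hes : 0 < / (eps * s)) by (apply Rinv_0_lt_compat; nra).
  assert (Hx1 : 1 <= x) by lra.
  pose proof (Gi_nonneg x ltac:(lra)) as Hg. pose proof (Gi_sq x) as Hq. pose proof (Bf_bounds x) as [Hb1 Hb2].
  assert (Hexp : exp (- (x * x)) <= 1 / (1 + x)).
  { apply Rle_trans with (exp (- x)). apply exp_le_mono; nra. apply exp_neg_le; lra. }
  assert (Hkey : Rabs (Gi x - s) * (Gi x + s) = Bf x).
  { rewrite <- (Rabs_pos_eq (Gi x + s)) by lra. rewrite <- Rabs_mult.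
    replace ((Gi x - s) * (Gi x + s)) with (Gi x * Gi x - s * s) by ring.
    rewrite Hq, Hs2. replace (PI / 4 - Bf x - PI / 4) with (- Bf x) by ring.
    rewrite Rabs_Ropp. apply Rabs_pos_eq; lra. }
  assert (Hlt : 1 / (1 + x) < eps * s).
  { assert (0 < eps * s) by nra.
    apply Rlt_le_trans with (/ x).
    - unfold Rdiv; rewrite Rmult_1_l; apply Rinv_lt_contravar; nra.
    - apply Rle_trans with (/ (/ (eps * s))).
      + apply Rinv_le_contravar; lra.
      + rewrite Rinv_inv. lra. }
  assert (Rabs (Gi x - s) * s <= Rabs (Gi x - s) * (Gi x + s)).
  { apply Rmult_le_compat_l. apply Rabs_pos. lra. }
  assert (Rabs (Gi x - s) * s < eps * s) by lra.
  apply Rmult_lt_reg_r with s; lra.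
Qed.

Lemma Gi_odd : forall x, Gi (- x) = - Gi x.
Proof.
  intros x. unfold Gi.
  assert (H := RInt_comp_lin (V:=R_CompleteNormedModule) Eg (-1) 0 0 x).
  replace (-1 * 0 + 0) with 0 in H by ring.
  replace (-1 * x + 0) with (- x) in H by ring.
  rewrite <- H by apply Eg_exRInt.
  rewrite (RInt_ext _ (fun y => scal (-1) (Eg y))).
  - rewrite (RInt_scal (V:=R_CompleteNormedModule)) by apply Eg_exRInt.
    unfold scal; simpl; unfold mult; simpl. ring.
  - intros. unfold Eg. f_equal. f_equal. ring_simplify. reflexivity.
Qed.

Section Gauss1D.
Variable tau : R.
Hypothesis Htau : 0 < tau.

Definition sq := sqrt (2 * tau).
Lemma sq_pos : 0 < sq.
Proof. unfold sq; apply sqrt_lt_R0; lra. Qed.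
Lemma sq_sq : sq * sq = 2 * tau.
Proof. unfold sq; apply sqrt_sqrt; lra. Qed.

Definition Pf (z : R) : R := Gi (z / sq) / sqrt PI.

Lemma gdens_eq : forall z, gdens tau z = Eg (z / sq) / (sqrt PI * sq).
Proof.
  intros z. unfold gdens, Eg. pose proof sq_pos. pose proof sq_sq.
  f_equal.
  - f_equal. replace (z / sq * (z / sq)) with (z * z / (sq * sq)) by (field; lra).
    rewrite H0. field. lra.
  - unfold sq. rewrite <- sqrt_mult. f_equal. ring. pose proof PI_RGT_0; lra. lra.
Qed.

Lemma Pf_deriv : forall z, is_derive Pf z (gdens tau z).
Proof.
  intros z. unfold Pf. pose proof sq_pos. pose proof sqrtPI_pos.
  auto_derive.
  - eexists; apply Gi_deriv.
  - replace (Derive (fun x : R => Gi x) (z * / sq)) with (Eg (z / sq))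
      by (symmetry; apply is_derive_unique; apply Gi_deriv).
    rewrite gdens_eq. field. lra.
Qed.

Lemma gdens_pos : forall z, 0 < gdens tau z.
Proof.
  intros z. unfold gdens. apply Rdiv_lt_0_compat. apply exp_pos.
  apply sqrt_lt_R0. pose proof PI_RGT_0. nra.
Qed.

Lemma gdens_even : forall z, gdens tau (- z) = gdens tau z.
Proof. intros z. unfold gdens. f_equal. f_equal. f_equal. ring. Qed.

Lemma gdens_deriv : forall z, is_derive (gdens tau) z (- (z / tau) * gdens tau z).
Proof.
  intros z. unfold gdens. pose proof PI_RGT_0.
  assert (0 < sqrt (2 * PI * tau)) by (apply sqrt_lt_R0; nra).
  auto_derive. auto. replace (- z ^ 2 / (2 * tau)) with (- (z * (z * 1)) * / (2 * tau)) by (field; lra). field. lra.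
Qed.

Lemma gdens_cont : forall z, continuous (gdens tau) z.
Proof. intros z. apply cont_R. eexists. apply gdens_deriv. Qed.

Definition Hq (a b c z : R) : R := (a + c * tau) * Pf z - tau * (b + c * z) * gdens tau z.

Lemma Hq_deriv : forall a b c z, is_derive (Hq a b c) z ((a + b * z + c * z ^ 2) * gdens tau z).
Proof.
  intros a b c z. unfold Hq.
  auto_derive.
  - split. eexists; apply Pf_deriv. split. eexists; apply gdens_deriv. auto.
  - replace (Derive (fun x => Pf x) z) with (gdens tau z) by (symmetry; apply is_derive_unique; apply Pf_deriv).
    replace (Derive (fun x => gdens tau x) z) with (- (z / tau) * gdens tau z)
      by (symmetry; apply is_derive_unique; apply gdens_deriv).
    field. lra.
Qed.

Lemma poly_exRInt : forall a b c a0 c0, ex_RInt (fun s => (a + b * s + c * s ^ 2) * gdens tau s) a0 c0.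
Proof.
  intros. apply exRInt_cont. intros z _. apply cont_R.
  auto_derive. eexists; apply gdens_deriv.
Qed.

Lemma poly_RInt : forall a b c a0 c0,
  RInt (fun s => (a + b * s + c * s ^ 2) * gdens tau s) a0 c0 = Hq a b c c0 - Hq a b c a0.
Proof.
  intros.
  assert (H := is_RInt_derive (V:=R_CompleteNormedModule) (Hq a b c)
                 (fun s => (a + b * s + c * s ^ 2) * gdens tau s) a0 c0).
  assert (H1 : forall x, Rmin a0 c0 <= x <= Rmax a0 c0 -> is_derive (Hq a b c) x ((fun s => (a + b * s + c * s ^ 2) * gdens tau s) x)).
  { intros; apply Hq_deriv. }
  assert (H2 : forall x, Rmin a0 c0 <= x <= Rmax a0 c0 -> continuous (fun s => (a + b * s + c * s ^ 2) * gdens tau s) x).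
  { intros. apply cont_R. auto_derive. eexists; apply gdens_deriv. }
  rewrite (is_RInt_unique _ _ _ _ (H H1 H2)). reflexivity.
Qed.

Lemma ygdens_small : forall eps, 0 < eps -> exists Y, 1 <= Y /\ forall y, Y <= y -> y * gdens tau y < eps.
Proof.
  intros eps He. pose proof PI_RGT_0.
  set (K0 := sqrt (2 * PI * tau)).
  assert (HK : 0 < K0) by (apply sqrt_lt_R0; nra).
  exists (1 + 2 * tau / (K0 * eps)). split.
  { assert (0 < 2 * tau / (K0 * eps)) by (apply Rdiv_lt_0_compat; nra). lra. }
  intros y Hy.
  assert (Hp : 0 < 2 * tau / (K0 * eps)) by (apply Rdiv_lt_0_compat; nra).
  assert (Hy1 : 1 <= y) by lra.
  unfold gdens. fold K0.
  assert (Hb : exp (- y ^ 2 / (2 * tau)) <= 2 * tau / (y * y)).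
  { replace (- y ^ 2 / (2 * tau)) with (- (y ^ 2 / (2 * tau))) by (field; lra).
    eapply Rle_trans. apply exp_neg_le. apply Rdiv_le_0_compat; nra.
    apply Rle_trans with (1 / (y ^ 2 / (2 * tau))).
    - apply Rmult_le_compat_l. lra. apply Rinv_le_contravar.
      apply Rdiv_lt_0_compat; nra. lra.
    - right. field. split; lra. }
  apply Rle_lt_trans with (y * (2 * tau / (y * y)) / K0).
  - unfold Rdiv at 1 3. rewrite !Rmult_assoc. apply Rmult_le_compat_l. lra.
    apply Rmult_le_compat_r. left; apply Rinv_0_lt_compat; lra. exact Hb.
  - replace (y * (2 * tau / (y * y)) / K0) with ((2 * tau / K0) / y) by (field; lra).
    apply (Rmult_lt_reg_r y). lra.
    replace (2 * tau / K0 / y * y) with (2 * tau / K0) by (field; lra).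
    assert (2 * tau / (K0 * eps) < y) by lra.
    assert (2 * tau / K0 = (2 * tau / (K0 * eps)) * eps) by (field; lra).
    rewrite H1. nra.
Qed.

Lemma Pf_lim : forall eps, 0 < eps -> exists Y, forall y, Y <= y -> Rabs (Pf y - 1 / 2) < eps.
Proof.
  intros eps He. pose proof sqrtPI_pos. pose proof sq_pos.
  destruct (Gi_lim (eps * sqrt PI)) as [X HX]. nra.
  exists (X * sq). intros y Hy.
  assert (HX' := HX (y / sq)).
  assert (X <= y / sq).
  { apply (Rmult_le_reg_r sq). lra. replace (y / sq * sq) with y by (field; lra). lra. }
  specialize (HX' H1).
  unfold Pf. replace (Gi (y / sq) / sqrt PI - 1 / 2) with ((Gi (y / sq) - sqrt PI / 2) / sqrt PI) by (field; lra).
  unfold Rdiv. rewrite Rabs_mult. rewrite (Rabs_pos_eq (/ sqrt PI)) by (left; apply Rinv_0_lt_compat; lra).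
  apply (Rmult_lt_reg_r (sqrt PI)). lra. rewrite Rmult_assoc, Rinv_l by lra. lra.
Qed.

Lemma Hq_lim : forall a b c eps, 0 < eps -> exists Y, forall y, Y <= y ->
  Rabs (Hq a b c y - (a + c * tau) / 2) < eps /\ Rabs (Hq a b c (- y) + (a + c * tau) / 2) < eps.
Proof.
  intros a b c eps He.
  set (K1 := Rabs (a + c * tau)). set (K2 := tau * (Rabs b + Rabs c)).
  destruct (Pf_lim (eps / (2 * (K1 + 1)))) as [Y1 HY1].
  { apply Rdiv_lt_0_compat. lra. unfold K1; pose proof (Rabs_pos (a + c * tau)); lra. }
  destruct (ygdens_small (eps / (2 * (K2 + 1)))) as [Y2 [HY2a HY2]].
  { apply Rdiv_lt_0_compat. lra. unfold K2; pose proof (Rabs_pos b); pose proof (Rabs_pos c); nra. }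
  exists (Rmax Y1 Y2). intros y Hy.
  assert (Hy1 : Y1 <= y) by (eapply Rle_trans; [apply Rmax_l|exact Hy]).
  assert (Hy2 : Y2 <= y) by (eapply Rle_trans; [apply Rmax_r|exact Hy]).
  specialize (HY1 y Hy1). specialize (HY2 y Hy2).
  assert (HK1 : 0 <= K1) by (apply Rabs_pos).
  assert (HK2 : 0 <= K2) by (unfold K2; pose proof (Rabs_pos b); pose proof (Rabs_pos c); nra).
  pose proof (gdens_pos y) as Hg.
  assert (Hyg : 0 <= y * gdens tau y) by nra.
  assert (T1 : K1 * Rabs (Pf y - 1 / 2) < eps / 2).
  { apply Rle_lt_trans with ((K1 + 1) * Rabs (Pf y - 1 / 2)).
    apply Rmult_le_compat_r. apply Rabs_pos. lra.
    apply Rlt_le_trans with ((K1 + 1) * (eps / (2 * (K1 + 1)))).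
    apply Rmult_lt_compat_l; lra. right; field; lra. }
  assert (T2 : tau * (Rabs b + Rabs c * y) * gdens tau y < eps / 2).
  { apply Rle_lt_trans with (K2 * (y * gdens tau y)).
    - unfold K2. pose proof (Rabs_pos b); pose proof (Rabs_pos c).
      assert (1 <= y) by lra.
      assert (Rabs b * gdens tau y <= Rabs b * (y * gdens tau y)).
      { apply Rmult_le_compat_l. lra. nra. }
      replace (tau * (Rabs b + Rabs c) * (y * gdens tau y)) with
        (tau * (Rabs b * (y * gdens tau y)) + tau * (Rabs c * (y * gdens tau y))) by ring.
      replace (tau * (Rabs b + Rabs c * y) * gdens tau y) with
        (tau * (Rabs b * gdens tau y) + tau * (Rabs c * (y * gdens tau y))) by ring.
      apply Rplus_le_compat_r. apply Rmult_le_compat_l; lra.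
    - apply Rle_lt_trans with ((K2 + 1) * (y * gdens tau y)). nra.
      apply Rlt_le_trans with ((K2 + 1) * (eps / (2 * (K2 + 1)))).
      apply Rmult_lt_compat_l; lra. right; field; lra. }
  assert (Hbc : forall s, Rabs (b + s) <= Rabs b + Rabs c * y -> Rabs (tau * (b + s) * gdens tau y) <= tau * (Rabs b + Rabs c * y) * gdens tau y).
  { intros s Hs. rewrite !Rabs_mult. rewrite (Rabs_pos_eq tau) by lra. rewrite (Rabs_pos_eq (gdens tau y)) by lra.
    apply Rmult_le_compat_r. lra. apply Rmult_le_compat_l. lra. exact Hs. }
  assert (E1 : Rabs (b + c * y) <= Rabs b + Rabs c * y).
  { eapply Rle_trans. apply Rabs_triang. rewrite Rabs_mult, (Rabs_pos_eq y) by lra. lra. }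
  assert (E2 : Rabs (b + - (c * y)) <= Rabs b + Rabs c * y).
  { eapply Rle_trans. apply Rabs_triang. rewrite Rabs_Ropp, Rabs_mult, (Rabs_pos_eq y) by lra. lra. }
  specialize (Hbc _ E1) as B1. specialize (Hbc _ E2) as B2.
  split.
  - unfold Hq.
    replace ((a + c * tau) * Pf y - tau * (b + c * y) * gdens tau y - (a + c * tau) / 2)
      with ((a + c * tau) * (Pf y - 1 / 2) + - (tau * (b + c * y) * gdens tau y)) by field.
    eapply Rle_lt_trans. apply Rabs_triang. rewrite Rabs_Ropp, Rabs_mult. fold K1. lra.
  - unfold Hq. unfold Pf. replace (- y / sq) with (- (y / sq)) by (unfold Rdiv; ring).
    rewrite Gi_odd, gdens_even. fold (Pf y).
    replace ((a + c * tau) * (- Gi (y / sq) / sqrt PI) - tau * (b + c * - y) * gdens tau y + (a + c * tau) / 2)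
      with (- ((a + c * tau) * (Pf y - 1 / 2)) + - (tau * (b + - (c * y)) * gdens tau y)) by (unfold Pf; field; pose proof sqrtPI_pos; lra).
    eapply Rle_lt_trans. apply Rabs_triang. rewrite !Rabs_Ropp, Rabs_mult. fold K1. lra.
Qed.

End Gauss1D.

Lemma gauss1_intro : forall tau g lv,
  (forall a c, ex_RInt (fun z => g z * gdens tau z) a c) ->
  (forall eps, 0 < eps -> exists A, forall a c, a <= - A -> A <= c ->
      Rabs (RInt (fun z => g z * gdens tau z) a c - lv) < eps) ->
  gauss1 tau g lv.
Proof.
  intros tau g lv H1 H2.
  exists (fun a c => ex_RInt_Reals_0 _ _ _ (H1 a c)).
  intros eps He. destruct (H2 eps He) as [A HA]. exists A. intros a c Ha Hc.
  rewrite <- RInt_Reals. apply HA; assumption.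
Qed.

Lemma gauss1_elim : forall tau g lv, gauss1 tau g lv ->
  (forall a c, ex_RInt (fun z => g z * gdens tau z) a c) /\
  (forall eps, 0 < eps -> exists A, forall a c, a <= - A -> A <= c ->
      Rabs (RInt (fun z => g z * gdens tau z) a c - lv) < eps).
Proof.
  intros tau g lv [pr H]. split.
  - intros a c. apply ex_RInt_Reals_1, pr.
  - intros eps He. destruct (H eps He) as [A HA]. exists A. intros a c Ha Hc.
    rewrite (RInt_Reals _ _ _ (pr a c)). apply HA; assumption.
Qed.

Lemma gauss1_poly : forall tau a b c, 0 < tau ->
  gauss1 tau (fun s => a + b * s + c * s ^ 2) (a + c * tau).
Proof.
  intros tau a b c Ht. apply gauss1_intro.
  - intros; apply poly_exRInt; auto.
  - intros eps He. destruct (Hq_lim tau Ht a b c (eps / 2)) as [Y HY]. lra.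
    exists Y. intros a0 c0 Ha Hc.
    rewrite poly_RInt by auto.
    destruct (HY c0 Hc) as [H1 _]. destruct (HY (- a0)) as [_ H2]. lra.
    rewrite Ropp_involutive in H2.
    replace (Hq tau a b c c0 - Hq tau a b c a0 - (a + c * tau))
      with ((Hq tau a b c c0 - (a + c * tau) / 2) + - (Hq tau a b c a0 + (a + c * tau) / 2)) by field.
    eapply Rle_lt_trans. apply Rabs_triang. rewrite Rabs_Ropp. lra.
Qed.


Lemma gauss1_lin : forall tau f g a b k, gauss1 tau f a -> gauss1 tau g b ->
  gauss1 tau (fun s => f s + k * g s) (a + k * b).
Proof.
  intros tau f g a b k Hf Hg.
  apply gauss1_elim in Hf as [Hf1 Hf2]. apply gauss1_elim in Hg as [Hg1 Hg2].
  assert (Heq : forall a0 c0, ex_RInt (fun z => (f z + k * g z) * gdens tau z) a0 c0 /\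
      RInt (fun z => (f z + k * g z) * gdens tau z) a0 c0 =
      RInt (fun z => f z * gdens tau z) a0 c0 + k * RInt (fun z => g z * gdens tau z) a0 c0).
  { intros a0 c0.
    assert (E1 : ex_RInt (fun z => plus (f z * gdens tau z) (scal k (g z * gdens tau z))) a0 c0).
    { apply (ex_RInt_plus (V:=R_NormedModule)). apply Hf1. apply (ex_RInt_scal (V:=R_NormedModule)). apply Hg1. }
    assert (Hext : forall z, plus (f z * gdens tau z) (scal k (g z * gdens tau z)) = (f z + k * g z) * gdens tau z).
    { intros z. unfold plus, scal; simpl; unfold plus, mult; simpl. ring. }
    split.
    - eapply ex_RInt_ext. 2: exact E1. intros; apply Hext.
    - rewrite <- (RInt_ext (fun z => plus (f z * gdens tau z) (scal k (g z * gdens tau z)))) by (intros; apply Hext).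
      rewrite (RInt_plus (V:=R_CompleteNormedModule)). rewrite (RInt_scal (V:=R_CompleteNormedModule)).
      reflexivity. apply Hg1. apply Hf1. apply (ex_RInt_scal (V:=R_NormedModule)). apply Hg1. }
  apply gauss1_intro.
  - intros; apply Heq.
  - intros eps He.
    destruct (Hf2 (eps / 2)) as [A1 HA1]. lra.
    destruct (Hg2 (eps / (2 * (Rabs k + 1)))) as [A2 HA2].
    { apply Rdiv_lt_0_compat. lra. pose proof (Rabs_pos k); lra. }
    exists (Rmax A1 A2). intros a0 c0 Ha Hc.
    assert (Ha1 : a0 <= - A1) by (pose proof (Rmax_l A1 A2); lra).
    assert (Ha2 : a0 <= - A2) by (pose proof (Rmax_r A1 A2); lra).
    assert (Hc1 : A1 <= c0) by (pose proof (Rmax_l A1 A2); lra).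
    assert (Hc2 : A2 <= c0) by (pose proof (Rmax_r A1 A2); lra).
    specialize (HA1 a0 c0 Ha1 Hc1). specialize (HA2 a0 c0 Ha2 Hc2).
    destruct (Heq a0 c0) as [_ ->].
    replace (RInt (fun z => f z * gdens tau z) a0 c0 + k * RInt (fun z => g z * gdens tau z) a0 c0 - (a + k * b))
      with ((RInt (fun z => f z * gdens tau z) a0 c0 - a) + k * (RInt (fun z => g z * gdens tau z) a0 c0 - b)) by ring.
    eapply Rle_lt_trans. apply Rabs_triang. rewrite Rabs_mult.
    assert (Rabs k * Rabs (RInt (fun z => g z * gdens tau z) a0 c0 - b) < eps / 2).
    { apply Rle_lt_trans with ((Rabs k + 1) * Rabs (RInt (fun z => g z * gdens tau z) a0 c0 - b)).
      apply Rmult_le_compat_r. apply Rabs_pos. lra.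
      apply Rlt_le_trans with ((Rabs k + 1) * (eps / (2 * (Rabs k + 1)))).
      apply Rmult_lt_compat_l. pose proof (Rabs_pos k); lra. exact HA2.
      right; field; pose proof (Rabs_pos k); lra. }
    lra.
Qed.

Lemma gauss1_mono : forall tau f g a b, 0 < tau -> gauss1 tau f a -> gauss1 tau g b ->
  (forall s, f s <= g s) -> a <= b.
Proof.
  intros tau f g a b Ht Hf Hg Hfg.
  apply gauss1_elim in Hf as [Hf1 Hf2]. apply gauss1_elim in Hg as [Hg1 Hg2].
  destruct (Rle_or_lt a b) as [H|H]; [exact H|exfalso].
  destruct (Hf2 ((a - b) / 2)) as [A1 HA1]. lra.
  destruct (Hg2 ((a - b) / 2)) as [A2 HA2]. lra.
  set (A := Rmax 0 (Rmax A1 A2)).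
  assert (A0 : 0 <= A) by apply Rmax_l.
  assert (AA : Rmax A1 A2 <= A) by apply Rmax_r.
  pose proof (Rmax_l A1 A2). pose proof (Rmax_r A1 A2).
  specialize (HA1 (- A) A ltac:(lra) ltac:(lra)). specialize (HA2 (- A) A ltac:(lra) ltac:(lra)).
  assert (RInt (fun z => f z * gdens tau z) (- A) A <= RInt (fun z => g z * gdens tau z) (- A) A).
  { apply RInt_le. lra. apply Hf1. apply Hg1. intros x _.
    apply Rmult_le_compat_r. left; apply gdens_pos; auto. apply Hfg. }
  apply Rabs_def2 in HA1. apply Rabs_def2 in HA2. lra.
Qed.

Lemma gauss_int_lin : forall n tau F G a b k, gauss_int n tau F a -> gauss_int n tau G b ->
  gauss_int n tau (fun z => F z + k * G z) (a + k * b).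
Proof.
  induction n; intros tau F G a b k HF HG; simpl in *.
  - subst; reflexivity.
  - destruct HF as [GF [HF1 HF2]]. destruct HG as [GG [HG1 HG2]].
    exists (fun z => GF z + k * GG z). split.
    + intros z. apply gauss1_lin; auto.
    + apply IHn; auto.
Qed.

Lemma gauss_int_mono : forall n tau F G a b, 0 < tau -> gauss_int n tau F a -> gauss_int n tau G b ->
  (forall z, F z <= G z) -> a <= b.
Proof.
  induction n; intros tau F G a b Ht HF HG HFG; simpl in *.
  - subst; apply HFG.
  - destruct HF as [GF [HF1 HF2]]. destruct HG as [GG [HG1 HG2]].
    apply (IHn tau GF GG); auto.
    intros z. apply (gauss1_mono tau (fun s => F (vupd z n s)) (fun s => G (vupd z n s))); auto.
Qed.

Lemma gauss_int_ext : forall n tau F G a, (forall z, F z = G z) -> gauss_int n tau F a -> gauss_int n tau G a.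
Proof.
  intros n tau F G a H. replace G with F. auto. apply functional_extensionality; auto.
Qed.

Lemma gauss_int_unique : forall n tau F a b, 0 < tau -> gauss_int n tau F a -> gauss_int n tau F b -> a = b.
Proof.
  intros. apply Rle_antisym; eapply gauss_int_mono; eauto; intros; lra.
Qed.

Lemma sumn_ext : forall n f g, (forall i, (i < n)%nat -> f i = g i) -> sumn n f = sumn n g.
Proof.
  induction n; intros f g H; simpl; auto.
  rewrite (IHn f g) by (intros; apply H; lia). rewrite H by lia. reflexivity.
Qed.

Lemma sumn_plus : forall n f g, sumn n (fun i => f i + g i) = sumn n f + sumn n g.
Proof. induction n; intros; simpl; [ring|rewrite IHn; ring]. Qed.

Lemma sumn_scal : forall n k f, sumn n (fun i => k * f i) = k * sumn n f.
Proof. induction n; intros; simpl; [ring|rewrite IHn; ring]. Qed.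

Lemma sumn_zero : forall n, sumn n (fun _ => 0) = 0.
Proof. induction n; simpl; [ring|rewrite IHn; ring]. Qed.

Lemma sumn_opp : forall n f, sumn n (fun i => - f i) = - sumn n f.
Proof. induction n; intros; simpl; [ring|rewrite IHn; ring]. Qed.

Lemma sumn_minus : forall n f g, sumn n (fun i => f i - g i) = sumn n f - sumn n g.
Proof. induction n; intros; simpl; [ring|rewrite IHn; ring]. Qed.

Lemma sumn_swap : forall n m f, sumn n (fun i => sumn m (fun j => f i j)) = sumn m (fun j => sumn n (fun i => f i j)).
Proof.
  induction n; intros m f; simpl.
  - rewrite sumn_zero; reflexivity.
  - rewrite IHn. rewrite <- sumn_plus. reflexivity.
Qed.

Lemma sumn_nonneg : forall n f, (forall i, (i < n)%nat -> 0 <= f i) -> 0 <= sumn n f.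
Proof.
  induction n; intros f H; simpl. lra.
  assert (0 <= sumn n f) by (apply IHn; intros; apply H; lia). assert (0 <= f n) by (apply H; lia). lra.
Qed.

Lemma sumn_le : forall n f g, (forall i, (i < n)%nat -> f i <= g i) -> sumn n f <= sumn n g.
Proof.
  induction n; intros f g H; simpl. lra.
  assert (sumn n f <= sumn n g) by (apply IHn; intros; apply H; lia). assert (f n <= g n) by (apply H; lia). lra.
Qed.

Lemma sumn_abs : forall n f, Rabs (sumn n f) <= sumn n (fun i => Rabs (f i)).
Proof.
  induction n; intros f; simpl. rewrite Rabs_R0; lra.
  eapply Rle_trans. apply Rabs_triang. specialize (IHn f). lra.
Qed.

Lemma sumn_sq_expand : forall K u v s,
  sumn K (fun k => (u k + v k * s) ^ 2) =
  sumn K (fun k => u k ^ 2) + (sumn K (fun k => 2 * u k * v k)) * s + (sumn K (fun k => v k ^ 2)) * s ^ 2.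
Proof. induction K; intros; cbn [sumn]; [ring|rewrite IHK; ring]. Qed.

Lemma vupd_eq : forall z m s, vupd z m s m = s.
Proof. intros. unfold vupd. rewrite Nat.eqb_refl. reflexivity. Qed.

Lemma vupd_lt : forall z m s i, (i < m)%nat -> vupd z m s i = z i.
Proof. intros. unfold vupd. destruct (Nat.eqb_spec i m). lia. reflexivity. Qed.

Lemma sumn_vupd : forall n z s (h : nat -> R -> R),
  sumn n (fun i => h i (vupd z n s i)) = sumn n (fun i => h i (z i)).
Proof. intros. apply sumn_ext. intros. rewrite vupd_lt by lia. reflexivity. Qed.

Lemma gauss1_ext : forall tau f g v, (forall s, f s = g s) -> gauss1 tau f v -> gauss1 tau g v.
Proof. intros. replace g with f. auto. apply functional_extensionality; auto. Qed.

Lemma gauss1_ext2 : forall tau f g v w, (forall s, f s = g s) -> v = w -> gauss1 tau f v -> gauss1 tau g w.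
Proof. intros. subst. eapply gauss1_ext; eauto. Qed.

Lemma gauss_int_poly : forall tau, 0 < tau -> forall (beta : nat -> R) (om : R) (K : nat) (A : nat -> nat -> R) n (alpha : R) (c : nat -> R),
  gauss_int n tau
    (fun z => alpha + sumn n (fun i => beta i * z i) + om * sumn K (fun k => (c k + sumn n (fun i => A k i * z i)) ^ 2))
    (alpha + om * (sumn K (fun k => c k ^ 2) + tau * sumn n (fun i => sumn K (fun k => A k i ^ 2)))).
Proof.
  intros tau Ht beta om K A n. induction n; intros alpha c; cbn [gauss_int sumn].
  - rewrite (sumn_ext K (fun k => (c k + 0) ^ 2) (fun k => c k ^ 2)) by (intros; f_equal; ring). ring.
  - exists (fun z => (alpha + om * tau * sumn K (fun k => A k n ^ 2)) + sumn n (fun i => beta i * z i)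
       + om * sumn K (fun k => (c k + sumn n (fun i => A k i * z i)) ^ 2)).
    split.
    + intros z.
      eapply gauss1_ext2.
      3: apply (gauss1_poly tau
          (alpha + sumn n (fun i => beta i * z i) + om * sumn K (fun k => (c k + sumn n (fun i => A k i * z i)) ^ 2))
          (beta n + om * sumn K (fun k => 2 * (c k + sumn n (fun i => A k i * z i)) * A k n))
          (om * sumn K (fun k => A k n ^ 2)) Ht).
      * intros s. rewrite vupd_eq.
        rewrite (sumn_vupd n z s (fun i x => beta i * x)).
        rewrite (sumn_ext K (fun k => (c k + (sumn n (fun i => A k i * vupd z n s i) + A k n * s)) ^ 2)
                   (fun k => ((c k + sumn n (fun i => A k i * z i)) + A k n * s) ^ 2)).
        2:{ intros k _. rewrite (sumn_vupd n z s (fun i x => A k i * x)). f_equal. ring. }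
        rewrite sumn_sq_expand. ring.
      * ring.
    + replace (alpha + om * (sumn K (fun k => c k ^ 2) + tau * (sumn n (fun i => sumn K (fun k => A k i ^ 2)) + sumn K (fun k => A k n ^ 2))))
        with ((alpha + om * tau * sumn K (fun k => A k n ^ 2)) + om * (sumn K (fun k => c k ^ 2) + tau * sumn n (fun i => sumn K (fun k => A k i ^ 2)))) by ring.
      apply IHn.
Qed.

Lemma sup_R_lub : forall P : R -> Prop, (exists y, P y) -> (exists M, forall y, P y -> y <= M) -> is_lub P (sup_R P).
Proof.
  intros P [y Hy] [M HM]. unfold sup_R.
  apply epsilon_spec.
  destruct (completeness P) as [m Hm].
  - exists M. intros z Hz. apply HM; auto.
  - exists y; auto.
  - exists m; auto.
Qed.

Lemma sup_le_shift : forall (P Q : R -> Prop) K,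
  (exists y, P y) -> (exists M, forall y, P y -> y <= M) ->
  (exists y, Q y) -> (exists M, forall y, Q y -> y <= M) ->
  (forall y, P y -> exists y', Q y' /\ y <= y' + K) -> sup_R P <= sup_R Q + K.
Proof.
  intros P Q K HP1 HP2 HQ1 HQ2 H.
  destruct (sup_R_lub P HP1 HP2) as [_ HP]. destruct (sup_R_lub Q HQ1 HQ2) as [HQ _].
  apply HP. intros y Hy. destruct (H y Hy) as [y' [Hy' Hle]].
  specialize (HQ y' Hy'). lra.
Qed.

Lemma sup_ge_elem : forall (P : R -> Prop) y, P y -> (exists M, forall y, P y -> y <= M) -> y <= sup_R P.
Proof.
  intros P y Hy HM. destruct (sup_R_lub P (ex_intro _ y Hy) HM) as [H _]. apply H; auto.
Qed.

Lemma sup_le_bound : forall (P : R -> Prop) C, (exists y, P y) -> (forall y, P y -> y <= C) -> sup_R P <= C.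
Proof.
  intros P C H1 H2. destruct (sup_R_lub P H1 (ex_intro _ C H2)) as [_ H]. apply H. intros y Hy; auto.
Qed.

Lemma Rabs_def2b : forall x C, Rabs x <= C -> - C <= x <= C.
Proof. intros x C H. unfold Rabs in H. destruct (Rcase_abs x); split; lra. Qed.

Definition ISf (U V : vec -> Prop) (f : vec -> vec -> R) : R :=
  inf_R (fun w => exists u, U u /\ w = sup_R (fun z => exists v, V v /\ z = f u v)).

Lemma IS_le : forall (U V : vec -> Prop) (f g : vec -> vec -> R) C K,
  (exists u, U u) -> (exists v, V v) ->
  (forall u v, U u -> V v -> Rabs (f u v) <= C) ->
  (forall u v, U u -> V v -> Rabs (g u v) <= C) ->
  (forall u v, U u -> V v -> f u v <= g u v + K) ->
  ISf U V f <= ISf U V g + K.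
Proof.
  intros U V f g C K [u0 Hu0] [v0 Hv0] Hf Hg Hfg.
  set (S := fun (h : vec -> vec -> R) u => sup_R (fun z => exists v, V v /\ z = h u v)).
  assert (Sb : forall h u, U u -> (forall u v, U u -> V v -> Rabs (h u v) <= C) -> - C <= S h u <= C).
  { intros h u Hu Hh. unfold S. split.
    - apply Rle_trans with (h u v0). specialize (Hh u v0 Hu Hv0). apply Rabs_def2b in Hh. lra.
      apply sup_ge_elem. exists v0; auto. exists C. intros y [v [Hv ->]].
      specialize (Hh u v Hu Hv). apply Rabs_def2b in Hh. lra.
    - apply sup_le_bound. exists (h u v0), v0; auto. intros y [v [Hv ->]].
      specialize (Hh u v Hu Hv). apply Rabs_def2b in Hh. lra. }
  assert (Sfg : forall u, U u -> S f u <= S g u + K).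
  { intros u Hu. unfold S. apply sup_le_shift.
    - exists (f u v0), v0; auto.
    - exists C. intros y [v [Hv ->]]. specialize (Hf u v Hu Hv). apply Rabs_def2b in Hf. lra.
    - exists (g u v0), v0; auto.
    - exists C. intros y [v [Hv ->]]. specialize (Hg u v Hu Hv). apply Rabs_def2b in Hg. lra.
    - intros y [v [Hv ->]]. exists (g u v). split. exists v; auto. apply Hfg; auto. }
  unfold ISf, inf_R.
  assert (sup_R (fun y => exists u, U u /\ - y = S g u) <= sup_R (fun y => exists u, U u /\ - y = S f u) + K).
  { apply sup_le_shift.
    - exists (- S g u0), u0. split; auto. ring.
    - exists C. intros y [u [Hu Hy]]. pose proof (Sb g u Hu Hg). lra.
    - exists (- S f u0), u0. split; auto. ring.
    - exists C. intros y [u [Hu Hy]]. pose proof (Sb f u Hu Hf). lra.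
    - intros y [u [Hu Hy]]. exists (- S f u). split. exists u. split; auto. ring.
      pose proof (Sfg u Hu). lra. }
  unfold S in H. lra.
Qed.

Lemma gauss_int_ext2 : forall n tau F G a b, (forall z, F z = G z) -> a = b -> gauss_int n tau F a -> gauss_int n tau G b.
Proof. intros. subst. eapply gauss_int_ext; eauto. Qed.

Lemma gauss_int_scale : forall n tau F a k, gauss_int n tau F a -> gauss_int n tau (fun z => k * F z) (k * a).
Proof.
  intros. eapply gauss_int_ext2; [| |apply (gauss_int_lin n tau F F a a (k - 1) H H)].
  intros; simpl; ring. ring.
Qed.

Lemma gauss_int_sum : forall n tau m (F : nat -> vec -> R) (v : nat -> R) (k : nat -> R) G0 a,
  (forall i, (i < m)%nat -> gauss_int n tau (F i) (v i)) -> gauss_int n tau G0 a ->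
  gauss_int n tau (fun z => G0 z + sumn m (fun i => k i * F i z)) (a + sumn m (fun i => k i * v i)).
Proof.
  intros n tau m F v k G0 a HF HG. induction m.
  - eapply gauss_int_ext2; [| |exact HG]; intros; simpl; ring.
  - assert (IH := IHm ltac:(intros; apply HF; lia)).
    assert (H := gauss_int_lin _ _ _ _ _ _ (k m) IH (HF m ltac:(lia))).
    eapply gauss_int_ext2; [| |exact H]; intros; simpl; ring.
Qed.

Lemma sumn_ge_term : forall n f i, (forall j, (j < n)%nat -> 0 <= f j) -> (i < n)%nat -> f i <= sumn n f.
Proof.
  induction n; intros f i H Hi. lia. cbn [sumn].
  destruct (Nat.eq_dec i n).
  - subst. assert (0 <= sumn n f) by (apply sumn_nonneg; intros; apply H; lia). lra.
  - assert (f i <= sumn n f) by (apply IHn; [intros; apply H; lia|lia]). assert (0 <= f n) by (apply H; lia). lra.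
Qed.

Lemma dot_sq : forall n v, dot n v v = sumn n (fun i => v i ^ 2).
Proof. intros. unfold dot. apply sumn_ext. intros; ring. Qed.

Lemma dot_nonneg : forall n v, 0 <= dot n v v.
Proof. intros. unfold dot. apply sumn_nonneg. intros. nra. Qed.

Lemma norm_nonneg : forall n v, 0 <= norm n v.
Proof. intros. unfold norm. apply sqrt_pos. Qed.

Lemma norm_sq : forall n v, norm n v ^ 2 = sumn n (fun i => v i ^ 2).
Proof. intros. unfold norm. rewrite <- dot_sq. simpl. rewrite Rmult_1_r. apply sqrt_sqrt, dot_nonneg. Qed.

Lemma vdist_sq : forall n x y, vdist n x y ^ 2 = sumn n (fun i => (x i - y i) ^ 2).
Proof. intros. unfold vdist. apply norm_sq. Qed.

Lemma vdist_nonneg : forall n x y, 0 <= vdist n x y.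
Proof. intros. apply norm_nonneg. Qed.

Lemma coord_le_norm : forall n v i, (i < n)%nat -> Rabs (v i) <= norm n v.
Proof.
  intros n v i Hi. rewrite <- sqrt_Rsqr_abs. unfold norm. apply sqrt_le_1_alt.
  rewrite dot_sq. unfold Rsqr. replace (v i * v i) with ((fun j => v j ^ 2) i) by (simpl; ring).
  apply (sumn_ge_term n (fun j => v j ^ 2) i); auto. intros; simpl; nra.
Qed.

Lemma sq_le : forall a b, 0 <= a -> a <= b -> a ^ 2 <= b ^ 2.
Proof. intros; nra. Qed.

Lemma NS_nonneg : forall n (A : mat), 0 <= sumn n (fun i => sumn n (fun j => A i j ^ 2)).
Proof. intros. apply sumn_nonneg; intros; apply sumn_nonneg; intros; nra. Qed.

Lemma mnorm_sq : forall n A, mnorm n A ^ 2 = sumn n (fun i => sumn n (fun j => A i j ^ 2)).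
Proof. intros. unfold mnorm. simpl. rewrite Rmult_1_r. apply sqrt_sqrt, NS_nonneg. Qed.

Lemma mnorm_nonneg : forall n A, 0 <= mnorm n A.
Proof. intros; unfold mnorm; apply sqrt_pos. Qed.

Lemma NS_le : forall n A C, mnorm n A <= C -> sumn n (fun i => sumn n (fun j => A i j ^ 2)) <= C ^ 2.
Proof. intros. rewrite <- mnorm_sq. apply sq_le. apply mnorm_nonneg. auto. Qed.

Lemma SS_le : forall n v C, norm n v <= C -> sumn n (fun i => v i ^ 2) <= C ^ 2.
Proof. intros. rewrite <- norm_sq. apply sq_le. apply norm_nonneg. auto. Qed.

Lemma CS_step : forall S U V a b, 0 <= U -> 0 <= V -> S ^ 2 <= U * V -> (S + a * b) ^ 2 <= (U + a ^ 2) * (V + b ^ 2).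
Proof.
  intros S U V a b HU HV HS.
  assert (Ha : 0 <= a ^ 2) by apply pow2_ge_0.
  assert (Hb : 0 <= b ^ 2) by apply pow2_ge_0.
  assert (H1 : 0 <= U * b ^ 2 + a ^ 2 * V) by (apply Rplus_le_le_0_compat; apply Rmult_le_pos; auto).
  assert (H2 : (2 * S * a * b) ^ 2 <= (U * b ^ 2 + a ^ 2 * V) ^ 2).
  { assert (0 <= (U * b ^ 2 - a ^ 2 * V) ^ 2) by apply pow2_ge_0.
    assert (S ^ 2 * (a ^ 2 * b ^ 2) <= U * V * (a ^ 2 * b ^ 2)) by (apply Rmult_le_compat_r; [apply Rmult_le_pos|]; auto).
    replace ((2 * S * a * b) ^ 2) with (4 * (S ^ 2 * (a ^ 2 * b ^ 2))) by ring.
    replace ((U * b ^ 2 + a ^ 2 * V) ^ 2) with ((U * b ^ 2 - a ^ 2 * V) ^ 2 + 4 * (U * V * (a ^ 2 * b ^ 2))) by ring.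
    lra. }
  assert (H3 : 2 * S * a * b <= U * b ^ 2 + a ^ 2 * V).
  { destruct (Rle_or_lt (2 * S * a * b) (U * b ^ 2 + a ^ 2 * V)). lra.
    exfalso. assert (0 <= U * b ^ 2 + a ^ 2 * V) by lra.
    assert ((U * b ^ 2 + a ^ 2 * V) ^ 2 < (2 * S * a * b) ^ 2).
    { assert (0 < (2 * S * a * b - (U * b ^ 2 + a ^ 2 * V)) * (2 * S * a * b + (U * b ^ 2 + a ^ 2 * V)))
        by (apply Rmult_lt_0_compat; lra).
      replace ((2 * S * a * b) ^ 2) with ((2 * S * a * b) * (2 * S * a * b)) by ring.
      replace ((U * b ^ 2 + a ^ 2 * V) ^ 2) with ((U * b ^ 2 + a ^ 2 * V) * (U * b ^ 2 + a ^ 2 * V)) by ring.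
      lra. }
    lra. }
  replace ((S + a * b) ^ 2) with (S ^ 2 + 2 * S * a * b + a ^ 2 * b ^ 2) by ring.
  replace ((U + a ^ 2) * (V + b ^ 2)) with (U * V + (U * b ^ 2 + a ^ 2 * V) + a ^ 2 * b ^ 2) by ring.
  lra.
Qed.

Lemma CS : forall n u v, (sumn n (fun i => u i * v i)) ^ 2 <= sumn n (fun i => u i ^ 2) * sumn n (fun i => v i ^ 2).
Proof.
  induction n; intros; cbn [sumn]. lra.
  apply CS_step. apply sumn_nonneg; intros; nra. apply sumn_nonneg; intros; nra. apply IHn.
Qed.

Lemma CSmat : forall n m (a : vec) (S : mat),
  sumn m (fun j => (sumn n (fun i => a i * S i j)) ^ 2) <=
  sumn n (fun i => a i ^ 2) * sumn m (fun j => sumn n (fun i => S i j ^ 2)).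
Proof.
  intros. rewrite <- sumn_scal. apply sumn_le. intros j _.
  apply (CS n a (fun i => S i j)).
Qed.

Lemma amgm : forall Q r eta, 0 <= Q -> 0 < eta -> sqrt Q * Rabs r <= (Q / eta + eta * r ^ 2) / 2.
Proof.
  intros Q r eta HQ He.
  set (s := sqrt Q). assert (Hs : s * s = Q) by (apply sqrt_sqrt; auto).
  assert (Hs0 : 0 <= s) by apply sqrt_pos.
  rewrite <- Hs. replace (r ^ 2) with (Rabs r * Rabs r) by (rewrite <- Rabs_mult; simpl; rewrite Rmult_1_r; apply Rabs_pos_eq; nra).
  set (t := Rabs r). assert (0 <= t) by apply Rabs_pos.
  apply (Rmult_le_reg_r (2 * eta)). lra.
  replace ((s * s / eta + eta * (t * t)) / 2 * (2 * eta)) with (s * s + eta * eta * (t * t)) by (field; lra).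
  assert (0 <= (s - eta * t) ^ 2) by apply pow2_ge_0.
  replace ((s - eta * t) ^ 2) with (s * s + eta * eta * (t * t) - s * t * (2 * eta)) in H0 by ring. lra.
Qed.

Lemma matvec_swap : forall n (a : vec) (S : mat) (z : vec),
  sumn n (fun i => a i * matvec n S z i) = sumn n (fun j => sumn n (fun i => a i * S i j) * z j).
Proof.
  intros. unfold matvec.
  rewrite (sumn_ext n _ (fun i => sumn n (fun j => a i * S i j * z j))).
  2:{ intros. rewrite <- sumn_scal. apply sumn_ext; intros; ring. }
  rewrite sumn_swap. apply sumn_ext. intros. rewrite (Rmult_comm _ (z i)). rewrite <- sumn_scal.
  apply sumn_ext; intros; ring.
Qed.

Lemma pw : forall M eta Q1 Q2 P P' p0 bz bz', 0 <= M -> 0 < eta -> 0 <= Q1 -> 0 <= Q2 ->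
  Rabs (P - P') <= M * sqrt Q1 -> Rabs (P' - p0) <= M * sqrt Q2 ->
  Rabs ((P - P') * (1 + bz) + (P' - p0) * (bz - bz')) <=
  M / 2 * (Q1 / eta + eta * (1 + bz) ^ 2 + eta * Q2 + (bz - bz') ^ 2 / eta).
Proof.
  intros M eta Q1 Q2 P P' p0 bz bz' HM He HQ1 HQ2 H1 H2.
  eapply Rle_trans. apply Rabs_triang. rewrite !Rabs_mult.
  assert (A1 : Rabs (P - P') * Rabs (1 + bz) <= M * (sqrt Q1 * Rabs (1 + bz))).
  { rewrite <- Rmult_assoc. apply Rmult_le_compat_r. apply Rabs_pos. auto. }
  assert (A2 : Rabs (P' - p0) * Rabs (bz - bz') <= M * (sqrt Q2 * Rabs (bz - bz'))).
  { rewrite <- Rmult_assoc. apply Rmult_le_compat_r. apply Rabs_pos. auto. }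
  assert (B1 := amgm Q1 (1 + bz) eta HQ1 He).
  assert (B2 := amgm Q2 (bz - bz') (/ eta) HQ2 (Rinv_0_lt_compat _ He)).
  replace (Q2 / / eta) with (eta * Q2) in B2 by (field; lra).
  replace (/ eta * (bz - bz') ^ 2) with ((bz - bz') ^ 2 / eta) in B2 by (field; lra).
  assert (M * (sqrt Q1 * Rabs (1 + bz)) <= M * ((Q1 / eta + eta * (1 + bz) ^ 2) / 2)) by (apply Rmult_le_compat_l; auto).
  assert (M * (sqrt Q2 * Rabs (bz - bz')) <= M * ((eta * Q2 + (bz - bz') ^ 2 / eta) / 2)) by (apply Rmult_le_compat_l; auto).
  lra.
Qed.

Lemma matvec_minus : forall n (A B : mat) z k,
  matvec n A z k - matvec n B z k = sumn n (fun i => (A k i - B k i) * z i).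
Proof. intros. unfold matvec. rewrite <- sumn_minus. apply sumn_ext; intros; ring. Qed.

Section Core.
Variables (d : nat) (tau : R) (phi : vec -> R) (M : R) (x x' : vec) (sg sg' si si' : mat)
  (bb bb' : vec) (e e' : R) (w w' : vec) (eta : R).
Hypothesis Htau : 0 < tau.
Hypothesis HM : 0 <= M.
Hypothesis Heta : 0 < eta.
Hypothesis Hphi : forall y y', Rabs (phi y - phi y') <= M * vdist d y y'.
Hypothesis HE : gauss_int d tau (fun z => phi (vadd x (matvec d sg z))) e.
Hypothesis HE' : gauss_int d tau (fun z => phi (vadd x' (matvec d sg' z))) e'.
Hypothesis HW : forall i, (i < d)%nat -> gauss_int d tau (fun z => phi (vadd x (matvec d sg z)) * matvec d si z i) (w i).
Hypothesis HW' : forall i, (i < d)%nat -> gauss_int d tau (fun z => phi (vadd x' (matvec d sg' z)) * matvec d si' z i) (w' i).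

Let beta := fun j => sumn d (fun i => bb i * si i j).
Let beta' := fun j => sumn d (fun i => bb' i * si' i j).
Let bz := fun z : vec => sumn d (fun j => beta j * z j).
Let bz' := fun z : vec => sumn d (fun j => beta' j * z j).
Let Q1 := fun z : vec => sumn d (fun k => (x k - x' k + sumn d (fun i => (sg k i - sg' k i) * z i)) ^ 2).
Let Q2 := fun z : vec => sumn d (fun k => (0 + sumn d (fun i => sg' k i * z i)) ^ 2).

Lemma core :
  Rabs ((e + sumn d (fun i => bb i * w i)) - (e' + sumn d (fun i => bb' i * w' i))) <=
  M / 2 * ((sumn d (fun k => (x k - x' k) ^ 2) + tau * sumn d (fun i => sumn d (fun k => (sg k i - sg' k i) ^ 2))) / eta
           + eta * (1 + tau * sumn d (fun i => beta i ^ 2))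
           + eta * (tau * sumn d (fun i => sumn d (fun k => sg' k i ^ 2)))
           + tau * sumn d (fun i => (beta i - beta' i) ^ 2) / eta).
Proof.
  assert (HS := gauss_int_sum d tau d (fun i z => phi (vadd x (matvec d sg z)) * matvec d si z i) w bb _ e HW HE).
  assert (HS' := gauss_int_sum d tau d (fun i z => phi (vadd x' (matvec d sg' z)) * matvec d si' z i) w' bb' _ e' HW' HE').
  assert (HD := gauss_int_lin _ _ _ _ _ _ (-1) HS HS').
  assert (PL := gauss_int_poly tau Htau (fun j => phi x' * (beta j - beta' j)) 0 0 (fun _ _ => 0) d 0 (fun _ => 0)).
  assert (HV := gauss_int_lin _ _ _ _ _ _ (-1) HD PL).
  assert (P1 := gauss_int_poly tau Htau (fun _ => 0) (/ eta) d (fun k i => sg k i - sg' k i) d 0 (fun k => x k - x' k)).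
  assert (P2 := gauss_int_poly tau Htau (fun _ => 0) eta 1 (fun _ i => beta i) d 0 (fun _ => 1)).
  assert (P3 := gauss_int_poly tau Htau (fun _ => 0) eta d sg' d 0 (fun _ => 0)).
  assert (P4 := gauss_int_poly tau Htau (fun _ => 0) (/ eta) 1 (fun _ i => beta i - beta' i) d 0 (fun _ => 0)).
  assert (HB := gauss_int_scale _ _ _ _ (M / 2) (gauss_int_lin _ _ _ _ _ _ 1 (gauss_int_lin _ _ _ _ _ _ 1 (gauss_int_lin _ _ _ _ _ _ 1 P1 P2) P3) P4)).
  assert (HBn := gauss_int_scale _ _ _ _ (-1) HB).
  assert (Hpt : forall z : vec,
    Rabs ((fun z0 => (phi (vadd x (matvec d sg z0)) + sumn d (fun i => bb i * (phi (vadd x (matvec d sg z0)) * matvec d si z0 i))) +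
       -1 * (phi (vadd x' (matvec d sg' z0)) + sumn d (fun i => bb' i * (phi (vadd x' (matvec d sg' z0)) * matvec d si' z0 i))) +
       -1 * (0 + sumn d (fun i => phi x' * (beta i - beta' i) * z0 i) + 0 * sumn 0 (fun k => (0 + sumn d (fun i => 0 * z0 i)) ^ 2))) z)
    <= M / 2 * ((0 + sumn d (fun i => 0 * z i) + / eta * sumn d (fun k => (x k - x' k + sumn d (fun i => (sg k i - sg' k i) * z i)) ^ 2)
        + 1 * (0 + sumn d (fun i => 0 * z i) + eta * sumn 1 (fun k => (1 + sumn d (fun i => beta i * z i)) ^ 2))
        + 1 * (0 + sumn d (fun i => 0 * z i) + eta * sumn d (fun k => (0 + sumn d (fun i => sg' k i * z i)) ^ 2)))
        + 1 * (0 + sumn d (fun i => 0 * z i) + / eta * sumn 1 (fun k => (0 + sumn d (fun i => (beta i - beta' i) * z i)) ^ 2)))).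
  { intros z. cbv beta.
    set (P := phi (vadd x (matvec d sg z))). set (P' := phi (vadd x' (matvec d sg' z))).
    assert (E0 : sumn d (fun i => 0 * z i) = 0).
    { rewrite (sumn_ext d _ (fun _ => 0)) by (intros; ring). apply sumn_zero. }
    assert (E1 : sumn d (fun i => bb i * (P * matvec d si z i)) = P * bz z).
    { rewrite (sumn_ext d _ (fun i => P * (bb i * matvec d si z i))) by (intros; ring).
      rewrite sumn_scal, matvec_swap. reflexivity. }
    assert (E2 : sumn d (fun i => bb' i * (P' * matvec d si' z i)) = P' * bz' z).
    { rewrite (sumn_ext d _ (fun i => P' * (bb' i * matvec d si' z i))) by (intros; ring).
      rewrite sumn_scal, matvec_swap. reflexivity. }
    assert (E3 : sumn d (fun i => phi x' * (beta i - beta' i) * z i) = phi x' * (bz z - bz' z)).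
    { unfold bz, bz'. rewrite <- sumn_minus, <- sumn_scal. apply sumn_ext; intros; ring. }
    assert (E4 : sumn d (fun i => (beta i - beta' i) * z i) = bz z - bz' z).
    { unfold bz, bz'. rewrite <- sumn_minus. apply sumn_ext; intros; ring. }
    rewrite E0, E1, E2, E3, E4. fold (bz z). cbn [sumn]. fold (Q1 z). fold (Q2 z).
    replace (P + P * bz z + -1 * (P' + P' * bz' z) + -1 * (0 + phi x' * (bz z - bz' z) + 0 * 0))
      with ((P - P') * (1 + bz z) + (P' - phi x') * (bz z - bz' z)) by ring.
    replace (0 + 0 + / eta * Q1 z + 1 * (0 + 0 + eta * (0 + (1 + bz z) ^ 2)) + 1 * (0 + 0 + eta * Q2 z) +
       1 * (0 + 0 + / eta * (0 + (0 + (bz z - bz' z)) ^ 2)))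
      with (Q1 z / eta + eta * (1 + bz z) ^ 2 + eta * Q2 z + (bz z - bz' z) ^ 2 / eta) by (field; lra).
    apply pw; auto.
    - unfold Q1. apply sumn_nonneg; intros; apply pow2_ge_0.
    - unfold Q2. apply sumn_nonneg; intros; apply pow2_ge_0.
    - eapply Rle_trans. apply Hphi. apply Rmult_le_compat_l. auto.
      right. unfold vdist, norm. f_equal. rewrite dot_sq. unfold Q1. apply sumn_ext. intros k _.
      unfold vadd. f_equal. rewrite <- matvec_minus. ring.
    - eapply Rle_trans. apply Hphi. apply Rmult_le_compat_l. auto.
      right. unfold vdist, norm. f_equal. rewrite dot_sq. unfold Q2. apply sumn_ext. intros k _.
      unfold vadd, matvec. f_equal. ring. }
  assert (Hup := gauss_int_mono _ _ _ _ _ _ Htau HV HB).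
  assert (Hlo := gauss_int_mono _ _ _ _ _ _ Htau HBn HV).
  specialize (Hup ltac:(intros z; specialize (Hpt z); apply Rabs_def2b in Hpt; cbv beta in *; lra)).
  specialize (Hlo ltac:(intros z; specialize (Hpt z); apply Rabs_def2b in Hpt; cbv beta in *; lra)).
  cbn [sumn] in Hup, Hlo.
  assert (S1 : sumn d (fun i => 0 + beta i ^ 2) = sumn d (fun i => beta i ^ 2)).
  { apply sumn_ext; intros; ring. }
  assert (S2 : sumn d (fun i => 0 + (beta i - beta' i) ^ 2) = sumn d (fun i => (beta i - beta' i) ^ 2)).
  { apply sumn_ext; intros; ring. }
  assert (S3 : sumn d (fun k : nat => 0 ^ 2) = 0).
  { rewrite (sumn_ext d _ (fun _ => 0)) by (intros; ring). apply sumn_zero. }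
  rewrite S1, S2, S3, sumn_zero in Hup. rewrite S1, S2, S3, sumn_zero in Hlo.
  apply Rabs_le. split.
  - eapply Rle_trans; [|eapply Rle_trans; [exact Hlo|right; ring]]. right. field. lra.
  - eapply Rle_trans; [|eapply Rle_trans; [exact Hup|]]. right; ring. right. field. lra.
Qed.
End Core.

Lemma M_nonneg : forall d (phi : vec -> R) M, (1 <= d)%nat ->
  (forall y y', Rabs (phi y - phi y') <= M * vdist d y y') -> 0 <= M.
Proof.
  intros d phi M Hd H.
  set (y := fun _ : nat => 0). set (y' := fun i : nat => if Nat.eqb i 0 then 1 else 0).
  assert (H1 : 1 <= vdist d y y' ^ 2).
  { rewrite vdist_sq. replace 1 with ((fun i => (y i - y' i) ^ 2) 0%nat) by (unfold y, y'; simpl; ring).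
    apply (sumn_ge_term d (fun i => (y i - y' i) ^ 2) 0%nat). intros; apply pow2_ge_0. lia. }
  assert (H2 := vdist_nonneg d y y').
  assert (H3 : 0 < vdist d y y') by (destruct (Req_dec (vdist d y y') 0) as [E|E]; [rewrite E in H1; simpl in H1; lra|lra]).
  specialize (H y y'). pose proof (Rabs_pos (phi y - phi y')).
  destruct (Rle_or_lt 0 M). auto. assert (M * vdist d y y' < 0) by nra. lra.
Qed.

Lemma le0_of_eta : forall X K, 0 <= K -> (forall eta, 0 < eta -> X <= K * eta) -> X <= 0.
Proof.
  intros X K HK H. destruct (Rle_or_lt X 0). auto.
  specialize (H (X / (K + 1)) ltac:(apply Rdiv_lt_0_compat; lra)).
  assert (K * (X / (K + 1)) < X).
  { apply (Rmult_lt_reg_r (K + 1)). lra. replace (K * (X / (K + 1)) * (K + 1)) with (K * X) by (field; lra). nra. }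
  lra.
Qed.

Lemma prod_le : forall a b A B, 0 <= a -> 0 <= b -> a <= A -> b <= B -> a * b <= A * B.
Proof. intros. apply Rmult_le_compat; auto. Qed.

Lemma sumn_swap_sq : forall n (A : mat), sumn n (fun i => sumn n (fun k => A k i ^ 2)) = sumn n (fun k => sumn n (fun i => A k i ^ 2)).
Proof. intros. apply sumn_swap. Qed.

Lemma bound_N : forall d (A : mat) K, mnorm d A <= K ->
  sumn d (fun i => sumn d (fun k => A k i ^ 2)) <= K ^ 2.
Proof. intros. rewrite sumn_swap_sq. apply NS_le; auto. Qed.

Lemma bound_Sb : forall d (bb : vec) (si : mat) Cb Ci, norm d bb <= Cb -> mnorm d si <= Ci ->
  sumn d (fun i => (sumn d (fun j => bb j * si j i)) ^ 2) <= Cb ^ 2 * Ci ^ 2.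
Proof.
  intros. eapply Rle_trans. apply CSmat. apply prod_le.
  apply sumn_nonneg; intros; apply pow2_ge_0. apply sumn_nonneg; intros; apply sumn_nonneg; intros; apply pow2_ge_0.
  apply SS_le; auto. apply bound_N; auto.
Qed.

Lemma bound_Sd : forall d (bb bb' : vec) (si si' : mat) Cb Ci Lb Li dl,
  norm d bb' <= Cb -> mnorm d si <= Ci ->
  vdist d bb bb' <= Lb * dl -> mnorm d (fun i j => si i j - si' i j) <= Li * dl ->
  sumn d (fun i => (sumn d (fun j => bb j * si j i) - sumn d (fun j => bb' j * si' j i)) ^ 2)
    <= 2 * ((Lb * dl) ^ 2 * Ci ^ 2 + Cb ^ 2 * (Li * dl) ^ 2).
Proof.
  intros d bb bb' si si' Cb Ci Lb Li dl H1 H2 H3 H4.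
  set (u := fun i => sumn d (fun j => (bb j - bb' j) * si j i)).
  set (v := fun i => sumn d (fun j => bb' j * (si j i - si' j i))).
  rewrite (sumn_ext d _ (fun i => (u i + v i) ^ 2)).
  2:{ intros i _. unfold u, v. rewrite <- sumn_plus, <- sumn_minus. f_equal. apply sumn_ext; intros; ring. }
  apply Rle_trans with (2 * sumn d (fun i => u i ^ 2) + 2 * sumn d (fun i => v i ^ 2)).
  { rewrite <- !sumn_scal, <- sumn_plus. apply sumn_le. intros.
    assert (0 <= (u i - v i) ^ 2) by apply pow2_ge_0. nra. }
  assert (Hu : sumn d (fun i => u i ^ 2) <= (Lb * dl) ^ 2 * Ci ^ 2).
  { unfold u. eapply Rle_trans. apply (CSmat d d (fun j => bb j - bb' j) si). apply prod_le.
    apply sumn_nonneg; intros; apply pow2_ge_0. apply sumn_nonneg; intros; apply sumn_nonneg; intros; apply pow2_ge_0.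
    rewrite <- vdist_sq. apply sq_le. apply vdist_nonneg. auto. apply bound_N; auto. }
  assert (Hv : sumn d (fun i => v i ^ 2) <= Cb ^ 2 * (Li * dl) ^ 2).
  { unfold v. eapply Rle_trans. apply (CSmat d d bb' (fun j i => si j i - si' j i)). apply prod_le.
    apply sumn_nonneg; intros; apply pow2_ge_0. apply sumn_nonneg; intros; apply sumn_nonneg; intros; apply pow2_ge_0.
    apply SS_le; auto. apply (bound_N d (fun j i => si j i - si' j i)); auto. }
  lra.
Qed.

Lemma Hinfsup_ISf : forall d I U V b l t x xi p,
  Hinfsup d I U V b l t x xi p = ISf U V (fun u v => dot d (b t x u v) xi + sumn I (fun i => p i * l i t x u v)).
Proof. reflexivity. Qed.

Lemma dot_bound : forall d (bb xi : vec) Cb, norm d bb <= Cb -> Rabs (dot d bb xi) <= Rabs Cb * sumn d (fun i => Rabs (xi i)).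
Proof.
  intros. unfold dot. eapply Rle_trans. apply sumn_abs. rewrite <- sumn_scal. apply sumn_le.
  intros i Hi. rewrite Rabs_mult. apply Rmult_le_compat_r. apply Rabs_pos.
  eapply Rle_trans. apply coord_le_norm; eauto. eapply Rle_trans; eauto. apply Rle_abs.
Qed.

Lemma pl_bound : forall I (p : vec) (f : nat -> R) C, simplex I p -> (forall i, (i < I)%nat -> Rabs (f i) <= C) ->
  Rabs (sumn I (fun i => p i * f i)) <= C.
Proof.
  intros I p f C [Hp1 Hp2] Hf. eapply Rle_trans. apply sumn_abs.
  apply Rle_trans with (sumn I (fun i => C * p i)).
  - apply sumn_le. intros. rewrite Rabs_mult, Rabs_pos_eq by (apply Hp1; auto). rewrite Rmult_comm.
    apply Rmult_le_compat_r. apply Hp1; auto. apply Hf; auto.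
  - rewrite sumn_scal, Hp2. lra.
Qed.

Theorem lemma3p3 (T : R) (d I : nat) (Cb Lb Cs Ls Ci Li Cl Ll Cg Lg : R) :
  0 < T -> (1 <= d)%nat -> (1 <= I)%nat ->
  exists c : R,
  forall (mU mV : nat) (U V : vec -> Prop)
    (b : R -> vec -> vec -> vec -> vec) (sigma sinv : R -> vec -> mat)
    (l : nat -> R -> vec -> vec -> vec -> R) (g : nat -> vec -> R),
  assumptionA T d I mU mV U V b sigma sinv l g Cb Lb Cs Ls Ci Li Cl Ll Cg Lg ->
  forall (L k : nat) (phi : vec -> R) (M : R),
  (k < L)%nat ->
  (forall y y', Rabs (phi y - phi y') <= M * vdist d y y') ->
  let tau := T / INR L in
  let tk := INR k * tau in
  forall (x x' p : vec), simplex I p ->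
  forall (e e' : R) (w w' : vec),
  gauss_int d tau (fun z => phi (vadd x (matvec d (sigma tk x) z))) e ->
  gauss_int d tau (fun z => phi (vadd x' (matvec d (sigma tk x') z))) e' ->
  (forall i, (i < d)%nat ->
     gauss_int d tau (fun z => phi (vadd x (matvec d (sigma tk x) z)) *
                               matvec d (sinv tk x) z i) (w i)) ->
  (forall i, (i < d)%nat ->
     gauss_int d tau (fun z => phi (vadd x' (matvec d (sigma tk x') z)) *
                               matvec d (sinv tk x') z i) (w' i)) ->
  Rabs (e + tau * Hinfsup d I U V b l tk x (fun i => w i / tau) p
        - e' - tau * Hinfsup d I U V b l tk x' (fun i => w' i / tau) p)
  <= (M * (1 + c * tau) + c * tau) * vdist d x x'.
Proof.
  intros HT Hd HI.
  set (c1 := (Ls ^ 2 + 2 * (Lb ^ 2 * Ci ^ 2 + Cb ^ 2 * Li ^ 2) + Cb ^ 2 * Ci ^ 2 + Cs ^ 2) / 2).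
  assert (Hc1 : 0 <= c1).
  { unfold c1. assert (0 <= Ls ^ 2) by apply pow2_ge_0. assert (0 <= Lb ^ 2 * Ci ^ 2) by (apply Rmult_le_pos; apply pow2_ge_0).
    assert (0 <= Cb ^ 2 * Li ^ 2) by (apply Rmult_le_pos; apply pow2_ge_0).
    assert (0 <= Cb ^ 2 * Ci ^ 2) by (apply Rmult_le_pos; apply pow2_ge_0). assert (0 <= Cs ^ 2) by apply pow2_ge_0. lra. }
  exists (c1 + Rabs Ll).
  intros mU mV U V b sigma sinv l g HA L k phi M HkL Hphi tau tk x x' p Hp e e' w w' HE HE' HW HW'.
  destruct HA as [_ [_ [HU [HV [Hb_bd [_ [Hb_lip [Hs_bd [Hs_lip [_ [Hi_bd [Hi_lip [Hl_bd [_ [Hl_lip _]]]]]]]]]]]]]]].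
  assert (HL : 0 < INR L) by (apply lt_0_INR; lia).
  assert (Htau : 0 < tau) by (unfold tau; apply Rdiv_lt_0_compat; auto).
  assert (Htk : inT T tk).
  { unfold inT, tk, tau. split.
    - apply Rmult_le_pos. apply pos_INR. left; apply Rdiv_lt_0_compat; lra.
    - assert (INR k < INR L) by (apply lt_INR; lia).
      replace (INR k * (T / INR L)) with (T * (INR k / INR L)) by (field; lra).
      rewrite <- (Rmult_1_r T) at 2. apply Rmult_le_compat_l. lra.
      apply (Rmult_le_reg_r (INR L)). auto. replace (INR k / INR L * INR L) with (INR k) by (field; lra). lra. }
  assert (HM := M_nonneg d phi M Hd Hphi).
  set (dl := vdist d x x').
  assert (Hdl : 0 <= dl) by apply vdist_nonneg.
  assert (Htt : Rabs (tk - tk) = 0) by (rewrite Rminus_diag_eq; auto; apply Rabs_R0).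
  set (c := c1 + Rabs Ll).
  set (Kb := (M * (1 + c * tau) + c * tau) * dl).
  set (fx := fun u v => dot d (b tk x u v) (fun i => w i / tau) + sumn I (fun i => p i * l i tk x u v)).
  set (fx' := fun u v => dot d (b tk x' u v) (fun i => w' i / tau) + sumn I (fun i => p i * l i tk x' u v)).
  assert (Key : forall u v, U u -> V v -> Rabs ((e + tau * fx u v) - (e' + tau * fx' u v)) <= Kb).
  { intros u v Hu Hv.
    set (bb := b tk x u v). set (bb' := b tk x' u v).
    set (sg := sigma tk x). set (sg' := sigma tk x'). set (si := sinv tk x). set (si' := sinv tk x').
    assert (Edot : forall (bv wv : vec), tau * dot d bv (fun i => wv i / tau) = sumn d (fun i => bv i * wv i)).
    { intros. unfold dot. rewrite <- sumn_scal. apply sumn_ext. intros; field; lra. }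
    assert (Split : (e + tau * fx u v) - (e' + tau * fx' u v) =
       ((e + sumn d (fun i => bb i * w i)) - (e' + sumn d (fun i => bb' i * w' i)))
       + tau * sumn I (fun i => p i * (l i tk x u v - l i tk x' u v))).
    { unfold fx, fx'. rewrite !Rmult_plus_distr_l, !Edot.
      rewrite (sumn_ext I (fun i => p i * (l i tk x u v - l i tk x' u v)) (fun i => p i * l i tk x u v - p i * l i tk x' u v))
        by (intros; ring).
      rewrite sumn_minus. fold bb bb'. ring. }
    assert (HN1 : sumn d (fun i => sumn d (fun k => (sg k i - sg' k i) ^ 2)) <= (Ls * dl) ^ 2).
    { apply (bound_N d (fun k i => sg k i - sg' k i)). eapply Rle_trans. apply Hs_lip; auto.
      rewrite Htt. right. unfold dl. ring. }
    assert (HSb : sumn d (fun i => (sumn d (fun j => bb j * si j i)) ^ 2) <= Cb ^ 2 * Ci ^ 2).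
    { apply bound_Sb. apply Hb_bd; auto. apply Hi_bd; auto. }
    assert (HN3 : sumn d (fun i => sumn d (fun k => sg' k i ^ 2)) <= Cs ^ 2).
    { apply bound_N. apply Hs_bd; auto. }
    assert (HSd : sumn d (fun i => (sumn d (fun j => bb j * si j i) - sumn d (fun j => bb' j * si' j i)) ^ 2)
                  <= 2 * ((Lb * dl) ^ 2 * Ci ^ 2 + Cb ^ 2 * (Li * dl) ^ 2)).
    { apply bound_Sd. apply Hb_bd; auto. apply Hi_bd; auto.
      eapply Rle_trans. apply Hb_lip; auto. rewrite Htt. right. unfold dl. ring.
      eapply Rle_trans. apply Hi_lip; auto. rewrite Htt. right. unfold dl. ring. }
    assert (HSx : sumn d (fun k => (x k - x' k) ^ 2) = dl ^ 2) by (unfold dl; rewrite vdist_sq; reflexivity).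
    set (A0 := 1 + tau * (Ls ^ 2 + 2 * (Lb ^ 2 * Ci ^ 2 + Cb ^ 2 * Li ^ 2))).
    set (B0 := 1 + tau * (Cb ^ 2 * Ci ^ 2 + Cs ^ 2)).
    assert (HB0 : 0 <= B0).
    { unfold B0. assert (0 <= Cb ^ 2 * Ci ^ 2) by (apply Rmult_le_pos; apply pow2_ge_0).
      assert (0 <= Cs ^ 2) by apply pow2_ge_0. nra. }
    assert (Heta : forall eta, 0 < eta ->
      Rabs ((e + sumn d (fun i => bb i * w i)) - (e' + sumn d (fun i => bb' i * w' i)))
        <= M / 2 * (A0 * dl ^ 2 / eta + B0 * eta)).
    { intros eta He.
      eapply Rle_trans. apply (core d tau phi M x x' sg sg' si si' bb bb' e e' w w' eta Htau HM He Hphi HE HE' HW HW').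
      apply Rmult_le_compat_l. lra.
      rewrite HSx.
      assert (X1 : tau * sumn d (fun i => sumn d (fun k => (sg k i - sg' k i) ^ 2)) <= tau * (Ls * dl) ^ 2)
        by (apply Rmult_le_compat_l; lra).
      assert (X2 : tau * sumn d (fun i => (sumn d (fun j => bb j * si j i)) ^ 2) <= tau * (Cb ^ 2 * Ci ^ 2))
        by (apply Rmult_le_compat_l; lra).
      assert (X3 : tau * sumn d (fun i => sumn d (fun k => sg' k i ^ 2)) <= tau * Cs ^ 2)
        by (apply Rmult_le_compat_l; lra).
      assert (X4 : tau * sumn d (fun i => (sumn d (fun j => bb j * si j i) - sumn d (fun j => bb' j * si' j i)) ^ 2)
                   <= tau * (2 * ((Lb * dl) ^ 2 * Ci ^ 2 + Cb ^ 2 * (Li * dl) ^ 2)))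
        by (apply Rmult_le_compat_l; lra).
      set (Y1 := tau * sumn d (fun i => sumn d (fun k => (sg k i - sg' k i) ^ 2))) in *.
      set (Y2 := tau * sumn d (fun i => (sumn d (fun j => bb j * si j i)) ^ 2)) in *.
      set (Y3 := tau * sumn d (fun i => sumn d (fun k => sg' k i ^ 2))) in *.
      set (Y4 := tau * sumn d (fun i => (sumn d (fun j => bb j * si j i) - sumn d (fun j => bb' j * si' j i)) ^ 2)) in *.
      assert (Z1 : (dl ^ 2 + Y1) / eta + Y4 / eta <= A0 * dl ^ 2 / eta).
      { unfold Rdiv. rewrite <- Rmult_plus_distr_r. apply Rmult_le_compat_r. left; apply Rinv_0_lt_compat; auto.
        unfold A0. nra. }
      assert (Z2 : eta * (1 + Y2) + eta * Y3 <= B0 * eta).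
      { unfold B0. nra. }
      lra. }
    assert (Part1 : Rabs ((e + sumn d (fun i => bb i * w i)) - (e' + sumn d (fun i => bb' i * w' i)))
                    <= M * (1 + tau * c1) * dl).
    { destruct (Req_dec dl 0) as [E0|E0].
      - rewrite E0 in *. rewrite Rmult_0_r.
        idtac.
        apply (le0_of_eta _ (M / 2 * B0)). apply Rmult_le_pos; lra.
        intros eta He. eapply Rle_trans. apply (Heta eta He). right. field. lra.
      - eapply Rle_trans. apply (Heta dl). lra. right. unfold A0, B0, c1. field. lra. }
    assert (Part2 : Rabs (tau * sumn I (fun i => p i * (l i tk x u v - l i tk x' u v))) <= tau * (Rabs Ll * dl)).
    { rewrite Rabs_mult, (Rabs_pos_eq tau) by lra. apply Rmult_le_compat_l. lra.
      apply pl_bound; auto. intros i Hi. eapply Rle_trans. apply Hl_lip; auto. rewrite Htt.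
      rewrite Rplus_0_l. apply Rmult_le_compat_r. auto. apply Rle_abs. }
    rewrite Split. eapply Rle_trans. apply Rabs_triang.
    unfold Kb, c.
    assert (0 <= M * tau * Rabs Ll * dl) by exact (Rmult_le_pos _ _ (Rmult_le_pos _ _ (Rmult_le_pos _ _ HM (Rlt_le _ _ Htau)) (Rabs_pos Ll)) Hdl).
    assert (0 <= c1 * tau * dl) by exact (Rmult_le_pos _ _ (Rmult_le_pos _ _ Hc1 (Rlt_le _ _ Htau)) Hdl).
    assert (EE : (M * (1 + (c1 + Rabs Ll) * tau) + (c1 + Rabs Ll) * tau) * dl
       = M * (1 + tau * c1) * dl + tau * (Rabs Ll * dl) + M * tau * Rabs Ll * dl + c1 * tau * dl) by ring.
    rewrite EE. lra. }
  set (C := Rabs Cb * (sumn d (fun i => Rabs (w i / tau)) + sumn d (fun i => Rabs (w' i / tau))) + Rabs Cl).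
  assert (HSw : 0 <= sumn d (fun i => Rabs (w i / tau))) by (apply sumn_nonneg; intros; apply Rabs_pos).
  assert (HSw' : 0 <= sumn d (fun i => Rabs (w' i / tau))) by (apply sumn_nonneg; intros; apply Rabs_pos).
  assert (Bfx : forall u v, U u -> V v -> Rabs (fx u v) <= C).
  { intros u v Hu Hv. unfold fx, C. eapply Rle_trans. apply Rabs_triang.
    assert (H1 := dot_bound d (b tk x u v) (fun i => w i / tau) Cb (Hb_bd tk x u v Htk Hu Hv)).
    assert (H2 : Rabs (sumn I (fun i => p i * l i tk x u v)) <= Rabs Cl).
    { apply pl_bound; auto. intros. eapply Rle_trans. apply Hl_bd; auto. apply Rle_abs. }
    assert (0 <= Rabs Cb * sumn d (fun i => Rabs (w' i / tau))) by (apply Rmult_le_pos; auto; apply Rabs_pos).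
    nra. }
  assert (Bfx' : forall u v, U u -> V v -> Rabs (fx' u v) <= C).
  { intros u v Hu Hv. unfold fx', C. eapply Rle_trans. apply Rabs_triang.
    assert (H1 := dot_bound d (b tk x' u v) (fun i => w' i / tau) Cb (Hb_bd tk x' u v Htk Hu Hv)).
    assert (H2 : Rabs (sumn I (fun i => p i * l i tk x' u v)) <= Rabs Cl).
    { apply pl_bound; auto. intros. eapply Rle_trans. apply Hl_bd; auto. apply Rle_abs. }
    assert (0 <= Rabs Cb * sumn d (fun i => Rabs (w i / tau))) by (apply Rmult_le_pos; auto; apply Rabs_pos).
    nra. }
  assert (I1 : ISf U V fx <= ISf U V fx' + (Kb - e + e') / tau).
  { apply (IS_le U V fx fx' C); auto. intros u v Hu Hv.
    specialize (Key u v Hu Hv). apply Rabs_def2b in Key.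
    apply (Rmult_le_reg_l tau). auto. replace (tau * (fx' u v + (Kb - e + e') / tau)) with (tau * fx' u v + Kb - e + e') by (field; lra).
    lra. }
  assert (I2 : ISf U V fx' <= ISf U V fx + (Kb + e - e') / tau).
  { apply (IS_le U V fx' fx C); auto. intros u v Hu Hv.
    specialize (Key u v Hu Hv). apply Rabs_def2b in Key.
    apply (Rmult_le_reg_l tau). auto. replace (tau * (fx u v + (Kb + e - e') / tau)) with (tau * fx u v + Kb + e - e') by (field; lra).
    lra. }
  rewrite !Hinfsup_ISf. fold fx fx'.
  assert (J1 : tau * ISf U V fx <= tau * ISf U V fx' + (Kb - e + e')).
  { replace (Kb - e + e') with (tau * ((Kb - e + e') / tau)) by (field; lra).
    rewrite <- Rmult_plus_distr_l. apply Rmult_le_compat_l; lra. }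
  assert (J2 : tau * ISf U V fx' <= tau * ISf U V fx + (Kb + e - e')).
  { replace (Kb + e - e') with (tau * ((Kb + e - e') / tau)) by (field; lra).
    rewrite <- Rmult_plus_distr_l. apply Rmult_le_compat_l; lra. }
  apply Rabs_le. split; lra.
Qed.
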